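(* The real line $\mathbb{R}$, the space of rational numbers $\mathbb{Q}$ and the space of irrational numbers $P=\mathbb{R}\setminus\mathbb{Q}$ (all with the usual subspace topology from $\mathbb{R}$) are each reconstructible.
   Context: For a topological space $X$ and $x \in X$, the set $X\setminus\{x\}$ carries the subspace topology. A card of $X$ is a space homeomorphic to $X \setminus \{x\}$ for some $x \in X$. The deck of $X$ is $\mathcal{D}(X)=\{[X\setminus\{x\}]_\sim : x \in X\}$, where $[Y]_\sim$ denotes the homeomorphism class of $Y$. A space $Z$ is a reconstruction of $X$ if $\mathcal{D}(Z)=\mathcal{D}(X)$. A space $X$ is reconstructible if every reconstruction of $X$ is homeomorphic to $X$. *)

(* Defs.v *)
From Stdlib Require Import Reals Lra QArith Qreals.
Open Scope R_scope.

(* A topological space: a carrier with a family of open sets closed under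
   finite intersections and arbitrary unions, containing the whole space
   (the empty set is the empty union). *)
Record TopSpace := {
  carrier :> Type;
  is_open : (carrier -> Prop) -> Prop;
  open_full : is_open (fun _ => True);
  open_inter : forall U V, is_open U -> is_open V -> is_open (fun x => U x /\ V x);
  open_union : forall F : (carrier -> Prop) -> Prop,
      (forall U, F U -> is_open U) -> is_open (fun x => exists U, F U /\ U x)
}.

Definition continuous (X Y : TopSpace) (f : X -> Y) : Prop :=
  forall V : Y -> Prop, is_open Y V -> is_open X (fun x => V (f x)).

Definition homeomorphic (X Y : TopSpace) : Prop :=
  exists (f : X -> Y) (g : Y -> X),
    (forall x, g (f x) = x) /\ (forall y, f (g y) = y) /\
    continuous X Y f /\ continuous Y X g.

Definition sub_open (X : TopSpace) (A : X -> Prop) (V : {x : X | A x} -> Prop) : Prop :=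
  exists U : X -> Prop, is_open X U /\ forall y, V y <-> U (proj1_sig y).

Lemma sub_open_full (X : TopSpace) (A : X -> Prop) : sub_open X A (fun _ => True).
Proof. exists (fun _ => True). split; [apply open_full | tauto]. Qed.

Lemma sub_open_inter (X : TopSpace) (A : X -> Prop) U V :
  sub_open X A U -> sub_open X A V -> sub_open X A (fun x => U x /\ V x).
Proof.
  intros [U' [HU EU]] [V' [HV EV]]. exists (fun x => U' x /\ V' x).
  split; [apply open_inter; auto|]. intros y. rewrite EU, EV. tauto.
Qed.

Lemma sub_open_union (X : TopSpace) (A : X -> Prop) F :
  (forall U, F U -> sub_open X A U) -> sub_open X A (fun x => exists U, F U /\ U x).
Proof.
  intros HF.
  exists (fun x => exists U, (is_open X U /\ exists V, F V /\ forall y, V y <-> U (proj1_sig y)) /\ U x).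
  split.
  - apply (open_union X (fun U => is_open X U /\ exists V, F V /\ forall y, V y <-> U (proj1_sig y))).
    intros U [H _]; exact H.
  - intros y; split.
    + intros [V [FV Vy]]. destruct (HF V FV) as [U [HU EU]].
      exists U. split; [split; [exact HU| exists V; auto] | apply EU; exact Vy].
    + intros [U [[HU [V [FV EV]]] Uy]]. exists V. split; [exact FV| apply EV; exact Uy].
Qed.

Definition subspace (X : TopSpace) (A : X -> Prop) : TopSpace :=
  {| carrier := {x : X | A x};
     is_open := sub_open X A;
     open_full := sub_open_full X A;
     open_inter := sub_open_inter X A;
     open_union := sub_open_union X A |}.

Definition card (X : TopSpace) (x : X) : TopSpace := subspace X (fun y => y <> x).

(* Y represents an element of the deck D(X), i.e. [Y] = [X \ {x}] for some x. *)
Definition in_deck (X Y : TopSpace) : Prop := exists x : X, homeomorphic Y (card X x).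

Definition same_deck (Z X : TopSpace) : Prop :=
  forall Y : TopSpace, in_deck Z Y <-> in_deck X Y.

Definition is_reconstruction (Z X : TopSpace) : Prop := same_deck Z X.

Definition reconstructible (X : TopSpace) : Prop :=
  forall Z : TopSpace, is_reconstruction Z X -> homeomorphic Z X.

Definition R_open (U : R -> Prop) : Prop :=
  forall x, U x -> exists eps, eps > 0 /\ forall y, Rabs (y - x) < eps -> U y.

Lemma R_open_full : R_open (fun _ => True).
Proof. intros x _. exists 1. split; [lra | auto]. Qed.

Lemma R_open_inter U V : R_open U -> R_open V -> R_open (fun x => U x /\ V x).
Proof.
  intros HU HV x [Ux Vx].
  destruct (HU x Ux) as [e1 [He1 H1]]. destruct (HV x Vx) as [e2 [He2 H2]].
  exists (Rmin e1 e2). split; [apply Rmin_pos; auto|].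
  intros y Hy. split; [apply H1 | apply H2];
  [apply Rlt_le_trans with (Rmin e1 e2); [exact Hy | apply Rmin_l]
  |apply Rlt_le_trans with (Rmin e1 e2); [exact Hy | apply Rmin_r]].
Qed.

Lemma R_open_union F : (forall U, F U -> R_open U) -> R_open (fun x => exists U, F U /\ U x).
Proof.
  intros HF x [U [FU Ux]]. destruct (HF U FU x Ux) as [e [He H]].
  exists e. split; [exact He|]. intros y Hy. exists U. auto.
Qed.

Definition R_top : TopSpace :=
  {| carrier := R; is_open := R_open; open_full := R_open_full;
     open_inter := R_open_inter; open_union := R_open_union |}.

Definition is_rational (x : R) : Prop := exists q : Q, x = Q2R q.

Definition Q_top : TopSpace := subspace R_top is_rational.
Definition P_top : TopSpace := subspace R_top (fun x => ~ is_rational x).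

(* Main.v *)
Require Import Defs.
From Stdlib Require Import Reals QArith Qreals Lra Lia ZArith ClassicalEpsilon Classical FunctionalExtensionality PropExtensionality ProofIrrelevance.
Open Scope R_scope.

Ltac sig_eq := apply eq_sig_hprop; [intros; apply proof_irrelevance| simpl].

Lemma open_ext (X : TopSpace) (U V : X -> Prop) :
  is_open X U -> (forall x, U x <-> V x) -> is_open X V.
Proof.
  intros H E. assert (U = V) as <-; [|exact H].
  apply functional_extensionality; intro x; apply propositional_extensionality; apply E.
Qed.

Lemma open_empty (X : TopSpace) : is_open X (fun _ => False).
Proof.
  apply open_ext with (fun x => exists U, (fun _:X->Prop => False) U /\ U x).
  - apply open_union; tauto.
  - firstorder.
Qed.

Lemma open_or (X : TopSpace) U V : is_open X U -> is_open X V -> is_open X (fun x => U x \/ V x).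
Proof.
  intros HU HV.
  apply open_ext with (fun x => exists W, (fun W => W = U \/ W = V) W /\ W x).
  - apply open_union. intros W [-> | ->]; auto.
  - intro x; split.
    + intros [W [[-> | ->] Hx]]; auto.
    + intros [Hx|Hx]; [exists U|exists V]; auto.
Qed.

Lemma open_local (X : TopSpace) (U : X -> Prop) :
  (forall x, U x -> exists V, is_open X V /\ V x /\ forall y, V y -> U y) -> is_open X U.
Proof.
  intros H.
  apply open_ext with (fun x => exists W, (fun W => is_open X W /\ forall y, W y -> U y) W /\ W x).
  - apply open_union. intros W [HW _]; auto.
  - intro x; split.
    + intros [W [[_ HW] Hx]]; auto.
    + intros Hx. destruct (H x Hx) as [V [HV [Vx HVU]]]. exists V; auto.
Qed.

Lemma homeo_refl X : homeomorphic X X.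
Proof. exists (fun x => x), (fun x => x). repeat split; intros V HV; exact HV. Qed.

Lemma homeo_sym X Y : homeomorphic X Y -> homeomorphic Y X.
Proof. intros [f [g [H1 [H2 [H3 H4]]]]]. exists g, f. auto. Qed.

Lemma homeo_trans X Y W : homeomorphic X Y -> homeomorphic Y W -> homeomorphic X W.
Proof.
  intros [f [g [H1 [H2 [H3 H4]]]]] [f' [g' [H1' [H2' [H3' H4']]]]].
  exists (fun x => f' (f x)), (fun y => g (g' y)). repeat split.
  - intro x. rewrite H1'. apply H1.
  - intro y. rewrite H2. apply H2'.
  - intros V HV. apply (H3 (fun y => V (f' y))). apply H3'. exact HV.
  - intros V HV. apply (H4' (fun y => V (g y))). apply H4. exact HV.
Qed.

Lemma sub_ext (X : TopSpace) (A B : X -> Prop) :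
  (forall x, A x <-> B x) -> homeomorphic (subspace X A) (subspace X B).
Proof.
  intros E.
  exists (fun y => exist B (proj1_sig y) (proj1 (E _) (proj2_sig y))),
         (fun y => exist A (proj1_sig y) (proj2 (E _) (proj2_sig y))).
  repeat split.
  - intros [x Hx]. sig_eq. reflexivity.
  - intros [x Hx]. sig_eq. reflexivity.
  - intros V [U [HU EU]]. exists U. split; [exact HU|]. intros [y Hy]. simpl. apply EU.
  - intros V [U [HU EU]]. exists U. split; [exact HU|]. intros [y Hy]. simpl. apply EU.
Qed.

Lemma sub_sub (X : TopSpace) (A : X -> Prop) (B : {x | A x} -> Prop) (B' : X -> Prop) :
  (forall y, B y <-> B' (proj1_sig y)) ->
  homeomorphic (subspace (subspace X A) B) (subspace X (fun x => A x /\ B' x)).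
Proof.
  intros E.
  pose (f := fun y : {y : {x : X | A x} | B y} =>
    exist (fun x => A x /\ B' x) (proj1_sig (proj1_sig y))
      (conj (proj2_sig (proj1_sig y)) (proj1 (E _) (proj2_sig y)))).
  pose (g := fun x : {x : X | A x /\ B' x} =>
    exist B (exist A (proj1_sig x) (proj1 (proj2_sig x)))
      (proj2 (E (exist A (proj1_sig x) (proj1 (proj2_sig x)))) (proj2 (proj2_sig x)))).
  exists f, g.
  repeat split.
  - intros [[x Ha] Hb]. sig_eq. sig_eq. reflexivity.
  - intros [x Hx]. sig_eq. reflexivity.
  - intros V [U [HU EU]]. exists (fun y => U (proj1_sig y)). split.
    + exists U. split; auto. tauto.
    + intros [[x Ha] Hb]. simpl. apply EU.
  - intros V [U [[U0 [HU0 EU0]] EU]]. exists U0. split; auto.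
    intros [x Hx]. simpl. rewrite EU. simpl. apply EU0.
Qed.

Lemma sub_homeo (X Y : TopSpace) (A : X -> Prop) (f : X -> Y) (g : Y -> X) :
  (forall x, g (f x) = x) -> (forall y, f (g y) = y) -> continuous X Y f -> continuous Y X g ->
  homeomorphic (subspace X A) (subspace Y (fun y => A (g y))).
Proof.
  intros H1 H2 H3 H4.
  assert (K : forall x : {x : X | A x}, A (g (f (proj1_sig x)))).
  { intros x. rewrite H1. exact (proj2_sig x). }
  exists (fun x : {x : X | A x} => exist (fun y => A (g y)) (f (proj1_sig x)) (K x)).
  exists (fun y : {y : Y | A (g y)} => exist A (g (proj1_sig y)) (proj2_sig y)).
  repeat split.
  - intros [x Hx]. simpl. apply eq_sig_hprop; [intros; apply proof_irrelevance|]. simpl. apply H1.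
  - intros [y Hy]. simpl. apply eq_sig_hprop; [intros; apply proof_irrelevance|]. simpl. apply H2.
  - intros V [U [HU EU]]. exists (fun x => U (f x)). split; [apply H3; auto|].
    intros [x Hx]. simpl. apply EU.
  - intros V [U [HU EU]]. exists (fun y => U (g y)). split; [apply H4; auto|].
    intros [y Hy]. simpl. apply EU.
Qed.

Lemma open_from_sub (Z T : TopSpace) (A : Z -> Prop) (f : subspace Z A -> T) (O : T -> Prop) :
  is_open Z A -> continuous _ _ f -> is_open T O ->
  is_open Z (fun x => exists H : A x, O (f (exist _ x H))).
Proof.
  intros HA Hf HO. destruct (Hf O HO) as [U [HU EU]].
  apply open_ext with (fun x => U x /\ A x).
  - apply open_inter; auto.
  - intro x; split.
    + intros [Ux Ax]. exists Ax. apply (EU (exist _ x Ax)). exact Ux.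
    + intros [Ax HO']. split; auto. apply (EU (exist _ x Ax)). exact HO'.
Qed.

Lemma open_to_sub (Z T : TopSpace) (A : Z -> Prop) (g : T -> subspace Z A) (U : Z -> Prop) :
  continuous _ _ g -> is_open Z U -> is_open T (fun t => U (proj1_sig (g t))).
Proof.
  intros Hg HU. apply (Hg (fun y => U (proj1_sig y))). exists U. split; auto. tauto.
Qed.

Definition t1 (X : TopSpace) := forall a : X, is_open X (fun x => x <> a).
Definition hausdorff (X : TopSpace) := forall x y : X, x <> y ->
  exists U V, is_open X U /\ is_open X V /\ U x /\ V y /\ (forall t, U t -> V t -> False).

Lemma hausdorff_homeo X Y : homeomorphic X Y -> hausdorff Y -> hausdorff X.
Proof.
  intros [f [g [H1 [H2 [H3 H4]]]]] HY x y Hxy.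
  destruct (HY (f x) (f y)) as [U [V [HU [HV [Ux [Vy D]]]]]].
  { intro E. apply Hxy. rewrite <- (H1 x), <- (H1 y), E. reflexivity. }
  exists (fun t => U (f t)), (fun t => V (f t)). repeat split; auto.
  intros t a b. eapply D; eauto.
Qed.

Lemma hausdorff_sub X A : hausdorff X -> hausdorff (subspace X A).
Proof.
  intros HX [x Hx] [y Hy] Hxy.
  destruct (HX x y) as [U [V [HU [HV [Ux [Vy D]]]]]].
  { intro E. subst. apply Hxy. f_equal. apply proof_irrelevance. }
  exists (fun t => U (proj1_sig t)), (fun t => V (proj1_sig t)). repeat split; auto.
  - exists U; split; auto; tauto.
  - exists V; split; auto; tauto.
  - intros t a b. eapply D; eauto.
Qed.

Lemma R_hausdorff : hausdorff R_top.
Proof.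
  intros x y Hxy. set (e := Rabs (x - y) / 2).
  assert (He : e > 0). { unfold e. assert (Rabs (x-y) > 0) by (apply Rabs_pos_lt; lra). lra. }
  exists (fun t => Rabs (t - x) < e), (fun t => Rabs (t - y) < e). repeat split.
  - intros t Ht. exists (e - Rabs (t - x)). split; [lra|]. intros u Hu.
    pose proof (Rabs_triang (u - t) (t - x)). replace (u - t + (t - x)) with (u - x) in H by ring. lra.
  - intros t Ht. exists (e - Rabs (t - y)). split; [lra|]. intros u Hu.
    pose proof (Rabs_triang (u - t) (t - y)). replace (u - t + (t - y)) with (u - y) in H by ring. lra.
  - simpl. replace (x - x) with 0 by ring. rewrite Rabs_R0. lra.
  - simpl. replace (y - y) with 0 by ring. rewrite Rabs_R0. lra.
  - intros t a b. simpl in a, b.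
    pose proof (Rabs_triang (x - t) (t - y)). replace (x - t + (t - y)) with (x - y) in H by ring.
    rewrite <- Rabs_Ropp in a. replace (- (t - x)) with (x - t) in a by ring. unfold e in *. lra.
Qed.

Lemma third_point (Z : TopSpace) (a b c : Z) : a <> b -> a <> c -> b <> c ->
  forall x y : Z, exists t, t <> x /\ t <> y.
Proof.
  intros Hab Hac Hbc x y.
  destruct (classic (a = x)) as [E1|E1].
  - destruct (classic (b = y)) as [E2|E2].
    + exists c. split; intro; subst; congruence.
    + exists b. split; [intro; subst; congruence| auto].
  - destruct (classic (a = y)) as [E2|E2].
    + destruct (classic (b = x)) as [E3|E3].
      * exists c. split; intro; subst; congruence.
      * exists b. split; [auto| intro; subst; congruence].
    + exists a. auto.
Qed.

Lemma sep_Z (Z : TopSpace) (a b c : Z) : a <> b -> a <> c -> b <> c ->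
  (forall t, hausdorff (card Z t)) -> t1 Z /\ hausdorff Z.
Proof.
  intros Hab Hac Hbc HH.
  assert (T1 : t1 Z).
  { intros a0. apply open_local. intros x Hx.
    destruct (third_point Z a b c Hab Hac Hbc x a0) as [t [Htx Hta]].
    destruct (HH t (exist _ x (fun e => Htx (eq_sym e))) (exist _ a0 (fun e => Hta (eq_sym e))))
      as [U [V [[U0 [HU0 EU0]] [HV [Ux [Vy D]]]]]].
    { intro E. apply Hx. apply (f_equal (@proj1_sig _ _)) in E. exact E. }
    exists U0. split; auto. split.
    - apply EU0 in Ux. exact Ux.
    - intros y Hy E. subst y. apply (D (exist _ a0 (fun e => Hta (eq_sym e)))); auto.
      apply EU0. exact Hy. }
  split; auto.
  intros x y Hxy.
  destruct (third_point Z a b c Hab Hac Hbc x y) as [t [Htx Hty]].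
  destruct (HH t (exist _ x (fun e => Htx (eq_sym e))) (exist _ y (fun e => Hty (eq_sym e))))
      as [U [V [[U0 [HU0 EU0]] [[V0 [HV0 EV0]] [Ux [Vy D]]]]]].
  { intro E. apply Hxy. apply (f_equal (@proj1_sig _ _)) in E. exact E. }
  exists (fun p => U0 p /\ p <> t), (fun p => V0 p /\ p <> t). repeat split.
  - apply open_inter; auto.
  - apply open_inter; auto.
  - apply EU0 in Ux. exact Ux.
  - auto.
  - apply EV0 in Vy. exact Vy.
  - auto.
  - intros p [Up Hp] [Vp _]. apply (D (exist (fun q => q <> t) p Hp)).
    + apply EU0. exact Up.
    + apply EV0. exact Vp.
Qed.

Lemma deck1 Z X : same_deck Z X -> forall z : Z, exists x : X, homeomorphic (card Z z) (card X x).
Proof. intros H z. apply (proj1 (H (card Z z))). exists z. apply homeo_refl. Qed.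

Lemma deck2 Z X : same_deck Z X -> forall x : X, exists z : Z, homeomorphic (card X x) (card Z z).
Proof.
  intros H x. destruct (proj2 (H (card X x))) as [z Hz].
  - exists x. apply homeo_refl.
  - exists z. exact Hz.
Qed.

Lemma absorb (Z : TopSpace) (C : Z -> Prop) (w : Z) :
  is_open Z C -> is_open Z (fun x => ~ C x) -> C w ->
  homeomorphic (subspace Z C) (subspace Z (fun x => C x /\ x <> w)) ->
  homeomorphic Z (card Z w).
Proof.
  intros HC HnC Cw [p [q [Hqp [Hpq [Hp Hq]]]]].
  assert (NW : forall x, ~ C x -> x <> w) by (intros x Hx E; subst; auto).
  pose (F := fun x : Z => match excluded_middle_informative (C x) with
     | left Hx => exist (fun y => y <> w) (proj1_sig (p (exist C x Hx))) (proj2 (proj2_sig (p (exist C x Hx))))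
     | right Hx => exist (fun y => y <> w) x (NW x Hx) end).
  pose (G := fun y : {y : Z | y <> w} => match excluded_middle_informative (C (proj1_sig y)) with
     | left Hy => proj1_sig (q (exist (fun x => C x /\ x <> w) (proj1_sig y) (conj Hy (proj2_sig y))))
     | right Hy => proj1_sig y end).
  exists F, G.
  repeat split.
  - intro x. unfold F. destruct (excluded_middle_informative (C x)) as [Hx|Hx].
    + unfold G. cbn [proj1_sig].
      destruct (excluded_middle_informative (C (proj1_sig (p (exist C x Hx))))) as [H'|H'].
      * assert (E : forall pf, exist (fun y => C y /\ y <> w) (proj1_sig (p (exist C x Hx)))
                    pf = p (exist C x Hx))
          by (intros; sig_eq; reflexivity).
        rewrite E, Hqp. reflexivity.
      * exfalso. apply H'. exact (proj1 (proj2_sig (p (exist _ x Hx)))).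
    + unfold G. cbn [proj1_sig]. destruct (excluded_middle_informative (C x)); [contradiction|reflexivity].
  - intros [y Hy]. unfold G. cbn [proj1_sig proj2_sig].
    destruct (excluded_middle_informative (C y)) as [Cy|Cy].
    + set (u := q (exist _ y (conj Cy Hy))). unfold F.
      destruct (excluded_middle_informative (C (proj1_sig u))) as [Cu|Cu].
      * sig_eq.
        assert (E : forall pf, exist C (proj1_sig u) pf = u) by (intros; sig_eq; reflexivity).
        rewrite E. unfold u. rewrite Hpq. reflexivity.
      * exfalso. apply Cu. apply (proj2_sig u).
    + unfold F. destruct (excluded_middle_informative (C y)); [contradiction|].
      sig_eq. reflexivity.
  - intros V [U [HU EU]].
    destruct (Hp (fun y => U (proj1_sig y))) as [O [HO EO]].
    { exists U. split; [exact HU|]. tauto. }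
    apply open_ext with (fun x => (O x /\ C x) \/ (U x /\ ~ C x)).
    + apply open_or; apply open_inter; auto.
    + intro x. rewrite EU. unfold F. destruct (excluded_middle_informative (C x)) as [Hx|Hx]; cbn [proj1_sig].
      * pose proof (EO (exist _ x Hx)) as E. cbn [proj1_sig] in E. rewrite <- E. tauto.
      * tauto.
  - intros U HU.
    destruct (Hq (fun y => U (proj1_sig y))) as [O [HO EO]].
    { exists U. split; [exact HU|]. tauto. }
    exists (fun x => (O x /\ C x) \/ (U x /\ ~ C x)). split.
    + apply open_or; apply open_inter; auto.
    + intros [y Hy]. unfold G. cbn [proj1_sig]. destruct (excluded_middle_informative (C y)) as [Cy|Cy].
      * pose proof (EO (exist _ y (conj Cy Hy))) as E. cbn [proj1_sig] in E. rewrite E. tauto.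
      * tauto.
Qed.

Lemma rat_Q2R q : is_rational (Q2R q). Proof. exists q. reflexivity. Qed.
Lemma rat_plus x y : is_rational x -> is_rational y -> is_rational (x + y).
Proof. intros [p ->] [q ->]. exists (p + q)%Q. rewrite Q2R_plus. reflexivity. Qed.
Lemma rat_opp x : is_rational x -> is_rational (- x).
Proof. intros [p ->]. exists (- p)%Q. rewrite Q2R_opp. reflexivity. Qed.
Lemma rat_minus x y : is_rational x -> is_rational y -> is_rational (x - y).
Proof. intros. unfold Rminus. apply rat_plus; auto. apply rat_opp; auto. Qed.
Lemma rat_mult x y : is_rational x -> is_rational y -> is_rational (x * y).
Proof. intros [p ->] [q ->]. exists (p * q)%Q. rewrite Q2R_mult. reflexivity. Qed.
Lemma rat_inv x : is_rational x -> x <> 0 -> is_rational (/ x).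
Proof.
  intros [p ->] H. exists (/ p)%Q. rewrite Q2R_inv; auto.
  intro E. apply H. rewrite (Qeq_eqR _ _ E). unfold Q2R. simpl. field.
Qed.
Lemma rat_div x y : is_rational x -> is_rational y -> y <> 0 -> is_rational (x / y).
Proof. intros. unfold Rdiv. apply rat_mult; auto. apply rat_inv; auto. Qed.
Lemma rat_IZR z : is_rational (IZR z).
Proof. exists (inject_Z z). unfold Q2R. simpl. field. Qed.
Lemma rat_INR n : is_rational (INR n).
Proof. rewrite INR_IZR_INZ. apply rat_IZR. Qed.

Lemma rat_between a b : a < b -> exists x, a < x < b /\ is_rational x.
Proof.
  intros Hab.
  set (n := up (/ (b - a))). set (m := up (a * IZR n)).
  destruct (archimed (/ (b - a))) as [A1 A2]. fold n in A1, A2.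
  destruct (archimed (a * IZR n)) as [B1 B2]. fold m in B1, B2.
  assert (Hba : / (b - a) > 0) by (apply Rinv_0_lt_compat; lra).
  assert (Hn : IZR n > 0) by lra.
  assert (K : (b - a) * IZR n > 1).
  { apply Rmult_gt_compat_l with (r := b - a) in A1; [|lra].
    rewrite Rinv_r in A1; lra. }
  exists (IZR m / IZR n). split; [split|].
  - apply Rmult_lt_reg_r with (IZR n); auto. unfold Rdiv. rewrite Rmult_assoc, Rinv_l; lra.
  - apply Rmult_lt_reg_r with (IZR n); auto. unfold Rdiv. rewrite Rmult_assoc, Rinv_l; nra.
  - apply rat_div; try apply rat_IZR. lra.
Qed.

Lemma no_sq2 : forall (n : nat) (d p : Z), (0 < d)%Z -> (Z.to_nat d <= n)%nat -> (p * p = 2 * (d * d))%Z -> False.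
Proof.
  induction n as [|n IH]; intros d p Hd Hn E.
  - lia.
  - destruct (Zeven_odd_dec p) as [Ep|Op].
    + destruct (Zeven_ex _ Ep) as [k ->].
      destruct (Zeven_odd_dec d) as [Ed|Od].
      * destruct (Zeven_ex _ Ed) as [j ->].
        apply (IH j k); try lia.
      * destruct (Zodd_ex _ Od) as [j ->].
        assert (k * k = 2 * (j * j) + 2 * j + 1)%Z by lia. lia.
    + destruct (Zodd_ex _ Op) as [k ->].
      assert (2 * (k * k + k) + 1 = d * d)%Z by lia. lia.
Qed.

Lemma sqrt2_irr : ~ is_rational (sqrt 2).
Proof.
  intros [q E]. destruct q as [p d]. unfold Q2R in E. simpl in E.
  assert (Hd : IZR (Z.pos d) > 0) by (apply IZR_lt; lia).
  assert (E2 : IZR p = sqrt 2 * IZR (Z.pos d)).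
  { rewrite E. field. lra. }
  assert (E3 : IZR (p * p) = IZR (2 * (Z.pos d * Z.pos d))).
  { rewrite !mult_IZR, E2.
    replace (sqrt 2 * IZR (Z.pos d) * (sqrt 2 * IZR (Z.pos d))) with
      (sqrt 2 * sqrt 2 * (IZR (Z.pos d) * IZR (Z.pos d))) by ring.
    rewrite sqrt_sqrt; lra. }
  apply eq_IZR in E3.
  apply (no_sq2 (Z.to_nat (Z.pos d)) (Z.pos d) p); auto; lia.
Qed.

Lemma irr_between a b : a < b -> exists x, a < x < b /\ ~ is_rational x.
Proof.
  intros H. destruct (rat_between a b H) as [q1 [[H1 H2] R1]].
  destruct (rat_between q1 b H2) as [q2 [[H3 H4] R2]].
  assert (S1 : 1 < sqrt 2).
  { rewrite <- sqrt_1. apply sqrt_lt_1_alt. lra. }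
  exists (q1 + (q2 - q1) / sqrt 2). split; [split|].
  - assert ((q2 - q1) / sqrt 2 > 0) by (apply Rdiv_lt_0_compat; lra). lra.
  - assert ((q2 - q1) / sqrt 2 < q2 - q1).
    { apply Rmult_lt_reg_r with (sqrt 2); [lra|]. unfold Rdiv. rewrite Rmult_assoc, Rinv_l; nra. }
    lra.
  - intro R3. apply sqrt2_irr.
    assert (E : sqrt 2 = (q2 - q1) / ((q1 + (q2 - q1) / sqrt 2) - q1)).
    { field. split; lra. }
    rewrite E. apply rat_div.
    + apply rat_minus; auto.
    + apply rat_minus; auto.
    + assert ((q2 - q1) / sqrt 2 > 0) by (apply Rdiv_lt_0_compat; lra). lra.
Qed.

Definition Sp (b : bool) (x : R) : Prop := if b then is_rational x else ~ is_rational x.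

Lemma Sp_between b a c : a < c -> exists x, a < x < c /\ Sp b x.
Proof. destruct b; simpl; [apply rat_between | apply irr_between]. Qed.
Lemma nSp_between b a c : a < c -> exists x, a < x < c /\ ~ Sp b x.
Proof.
  destruct b; simpl; intros H.
  - apply irr_between; auto.
  - destruct (rat_between a c H) as [x [Hx Rx]]. exists x. tauto.
Qed.

Definition mono_bij (I J : R -> Prop) (f : R -> R) : Prop :=
  (forall x, I x -> J (f x)) /\ (forall y, J y -> exists x, I x /\ f x = y) /\
  (forall x y, I x -> I y -> x < y -> f x < f y).
Definition rat_pres (I : R -> Prop) (f : R -> R) : Prop :=
  forall x, I x -> (is_rational (f x) <-> is_rational x).

Lemma mb_le I J f x y : mono_bij I J f -> I x -> I y -> f x < f y -> x < y.
Proof.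
  intros [_ [_ M]] Ix Iy H. destruct (Rtotal_order x y) as [|[->|]]; auto; try lra.
  specialize (M y x Iy Ix H0). lra.
Qed.

Lemma mb_inj I J f x y : mono_bij I J f -> I x -> I y -> f x = f y -> x = y.
Proof.
  intros [_ [_ M]] Ix Iy H. destruct (Rtotal_order x y) as [|[->|]]; auto.
  - specialize (M x y Ix Iy H0). lra.
  - specialize (M y x Iy Ix H0). lra.
Qed.

Lemma mb_inv I J f : mono_bij I J f -> exists g, mono_bij J I g /\
  (forall x, I x -> g (f x) = x) /\ (forall y, J y -> f (g y) = y) /\
  (rat_pres I f -> rat_pres J g).
Proof.
  intros MB. pose proof MB as [M1 [M2 M3]].
  pose (g := fun y => match excluded_middle_informative (J y) with
                   | left H => proj1_sig (constructive_indefinite_description _ (M2 y H))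
                   | right _ => 0 end).
  exists g.
  assert (G1 : forall y, J y -> I (g y) /\ f (g y) = y).
  { intros y Hy. unfold g. destruct (excluded_middle_informative (J y)); [|contradiction].
    destruct (constructive_indefinite_description _ _) as [x Hx]. exact Hx. }
  assert (GF : forall x, I x -> g (f x) = x).
  { intros x Hx. destruct (G1 (f x) (M1 x Hx)) as [A B]. apply (mb_inj I J f); auto. }
  split; [split; [|split]|split; [|split]].
  - intros y Hy. apply G1; auto.
  - intros x Hx. exists (f x). split; auto.
  - intros y1 y2 H1 H2 H. destruct (G1 y1 H1) as [A1 B1]. destruct (G1 y2 H2) as [A2 B2].
    apply (mb_le I J f); auto. rewrite B1, B2. auto.
  - exact GF.
  - intros y Hy. apply G1; auto.
  - intros RP y Hy. destruct (G1 y Hy) as [A B]. rewrite <- (RP _ A), B. tauto.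
Qed.

Lemma mb_comp I J K f g : mono_bij I J f -> mono_bij J K g -> mono_bij I K (fun x => g (f x)).
Proof.
  intros [F1 [F2 F3]] [G1 [G2 G3]]. repeat split.
  - auto.
  - intros z Hz. destruct (G2 z Hz) as [y [Hy <-]]. destruct (F2 y Hy) as [x [Hx <-]]. eauto.
  - auto.
Qed.

Lemma rp_comp I J f g : mono_bij I J f -> rat_pres I f -> rat_pres J g -> rat_pres I (fun x => g (f x)).
Proof. intros [F1 _] R1 R2 x Hx. rewrite (R2 _ (F1 x Hx)). auto. Qed.

Lemma mb_ext I J I' J' f : mono_bij I J f -> (forall x, I x <-> I' x) -> (forall y, J y <-> J' y) -> mono_bij I' J' f.
Proof.
  intros [F1 [F2 F3]] EI EJ. repeat split.
  - intros x Hx. apply EJ, F1, EI, Hx.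
  - intros y Hy. destruct (F2 y (proj2 (EJ y) Hy)) as [x [Hx E]]. exists x. split; auto. apply EI; auto.
  - intros x y Hx Hy. apply F3; apply EI; auto.
Qed.

Lemma rp_ext I I' f : rat_pres I f -> (forall x, I' x -> I x) -> rat_pres I' f.
Proof. intros R E x Hx. apply R, E, Hx. Qed.

Lemma mb_glue I1 J1 f1 I2 J2 f2 :
  mono_bij I1 J1 f1 -> mono_bij I2 J2 f2 ->
  (forall x y, I1 x -> I2 y -> x < y) -> (forall x y, J1 x -> J2 y -> x < y) ->
  mono_bij (fun x => I1 x \/ I2 x) (fun y => J1 y \/ J2 y)
    (fun x => if excluded_middle_informative (I1 x) then f1 x else f2 x).
Proof.
  intros [F1 [F2 F3]] [G1 [G2 G3]] HI HJ.
  assert (D : forall x, I1 x -> I2 x -> False) by (intros x A B; specialize (HI x x A B); lra).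
  repeat split.
  - intros x [Hx|Hx]; destruct (excluded_middle_informative (I1 x)); auto.
    exfalso; eauto.
  - intros y [Hy|Hy].
    + destruct (F2 y Hy) as [x [Hx E]]. exists x. split; auto.
      destruct (excluded_middle_informative (I1 x)); [auto|contradiction].
    + destruct (G2 y Hy) as [x [Hx E]]. exists x. split; auto.
      destruct (excluded_middle_informative (I1 x)); [exfalso; eauto|auto].
  - intros x y Hx Hy H.
    destruct (excluded_middle_informative (I1 x)) as [A|A];
    destruct (excluded_middle_informative (I1 y)) as [B|B].
    + auto.
    + destruct Hy as [Hy|Hy]; [contradiction|]. apply HJ; auto.
    + destruct Hx as [Hx|Hx]; [contradiction|]. exfalso. specialize (HI y x B Hx). lra.
    + destruct Hx as [Hx|Hx]; [contradiction|]. destruct Hy as [Hy|Hy]; [contradiction|]. auto.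
Qed.

Lemma rp_glue I1 f1 I2 f2 : rat_pres I1 f1 -> rat_pres I2 f2 ->
  rat_pres (fun x => I1 x \/ I2 x) (fun x => if excluded_middle_informative (I1 x) then f1 x else f2 x).
Proof.
  intros R1 R2 x Hx. destruct (excluded_middle_informative (I1 x)); [auto|].
  destruct Hx; [contradiction|auto].
Qed.

Lemma mb_refl I J f : mono_bij I J f ->
  mono_bij (fun x => I (- x)) (fun y => J (- y)) (fun x => - f (- x)).
Proof.
  intros [F1 [F2 F3]]. repeat split.
  - intros x Hx. rewrite Ropp_involutive. auto.
  - intros y Hy. destruct (F2 _ Hy) as [x [Hx E]]. exists (- x). rewrite Ropp_involutive. split; auto. lra.
  - intros x y Hx Hy H. assert (f (- y) < f (- x)) by (apply F3; auto; lra). lra.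
Qed.

Lemma rp_refl I f : rat_pres I f -> rat_pres (fun x => I (- x)) (fun x => - f (- x)).
Proof.
  intros R x Hx. split; intro H.
  - pose proof (rat_opp _ H) as H'. rewrite Ropp_involutive in H'.
    pose proof (proj1 (R (- x) Hx) H') as H2.
    pose proof (rat_opp _ H2) as H3. rewrite Ropp_involutive in H3. auto.
  - apply rat_opp. apply R; auto. apply rat_opp; auto.
Qed.

Lemma mb_remove I J f c : mono_bij I J f -> I c ->
  mono_bij (fun x => I x /\ x <> c) (fun y => J y /\ y <> f c) f.
Proof.
  intros MB Ic. pose proof MB as [F1 [F2 F3]]. split; [|split].
  - intros x [Hx Hc]. split; auto. intro E. apply Hc. apply (mb_inj I J f); auto.
  - intros y [Hy Hc]. destruct (F2 y Hy) as [x [Hx E]]. exists x. repeat split; auto.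
    intro; subst; auto.
  - intros x y [Hx _] [Hy _]. auto.
Qed.

Definition ivl (u : option R) (x : R) : Prop := match u with Some a => a < x | None => True end.
Definition ivr (v : option R) (x : R) : Prop := match v with Some b => x < b | None => True end.
Definition iv u v x := ivl u x /\ ivr v x.
Definition ivlt (u v : option R) : Prop := match u, v with Some a, Some b => a < b | _, _ => True end.

Lemma iv_open u v : R_open (iv u v).
Proof.
  intros x [Hl Hr].
  assert (exists e, e > 0 /\ ivl u (x - e) /\ ivr v (x + e)) as [e [He [A B]]].
  { destruct u as [a|]; destruct v as [b|]; simpl in *.
    - exists (Rmin (x - a) (b - x) / 2). unfold Rmin. destruct (Rle_dec (x - a) (b - x)); repeat split; lra.
    - exists ((x - a) / 2). repeat split; lra.
    - exists ((b - x) / 2). repeat split; lra.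
    - exists 1. repeat split; lra. }
  exists e. split; auto. intros y Hy. apply Rabs_def2 in Hy. destruct Hy as [Hy1 Hy2].
  destruct u; destruct v; simpl in *; split; simpl; auto; lra.
Qed.

Definition qb (a b : R) : R :=
  match excluded_middle_informative (a < b) with
  | left H => proj1_sig (constructive_indefinite_description _ (rat_between a b H))
  | right _ => a end.

Lemma qb_spec a b : a < b -> a < qb a b < b /\ is_rational (qb a b).
Proof.
  intros H. unfold qb. destruct (excluded_middle_informative (a < b)); [|contradiction].
  destruct (constructive_indefinite_description _ _) as [x Hx]. exact Hx.
Qed.

Fixpoint rs (c b : R) (n : nat) : R :=
  match n with O => c | S n => qb (Rmax (rs c b n) (b - / INR (S n))) b end.

Lemma floor_nat t : 0 <= t -> exists n : nat, INR n <= t < INR n + 1.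
Proof.
  intros Ht. destruct (archimed t) as [A1 A2].
  assert (Hz : (0 < up t)%Z) by (apply lt_IZR; lra).
  exists (Z.to_nat (up t - 1)). rewrite INR_IZR_INZ, Z2Nat.id by lia.
  rewrite minus_IZR. simpl. lra.
Qed.

Lemma seq_exists c v : is_rational c -> ivr v c ->
  exists r : nat -> R, r O = c /\ (forall n, is_rational (r n)) /\ (forall n, r n < r (S n)) /\
    (forall n, ivr v (r n)) /\ (forall y, ivr v y -> exists n, y < r n).
Proof.
  intros Rc Hc. destruct v as [b|]; simpl in *.
  - assert (K : forall n, rs c b n < b /\ is_rational (rs c b n)).
    { induction n as [|n IH]; [simpl; auto|].
      assert (H : Rmax (rs c b n) (b - / INR (S n)) < b).
      { unfold Rmax. destruct (Rle_dec _ _); [|lra].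
        assert (/ INR (S n) > 0) by (apply Rinv_0_lt_compat, lt_0_INR; lia). lra. }
      destruct (qb_spec _ _ H) as [[Q1 Q2] Q3].
      change (rs c b (S n)) with (qb (Rmax (rs c b n) (b - / INR (S n))) b). auto. }
    assert (K2 : forall n, rs c b n < rs c b (S n) /\ b - / INR (S n) < rs c b (S n)).
    { intro n. change (rs c b (S n)) with (qb (Rmax (rs c b n) (b - / INR (S n))) b). destruct (K n) as [K1 _].
      assert (H : Rmax (rs c b n) (b - / INR (S n)) < b).
      { unfold Rmax. destruct (Rle_dec _ _); [|lra].
        assert (/ INR (S n) > 0) by (apply Rinv_0_lt_compat, lt_0_INR; lia). lra. }
      destruct (qb_spec _ _ H) as [[Q1 Q2] _].
      pose proof (Rmax_l (rs c b n) (b - / INR (S n))).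
      pose proof (Rmax_r (rs c b n) (b - / INR (S n))). split; lra. }
    exists (rs c b). repeat split.
    + intro n. apply K.
    + intro n. apply K2.
    + intro n. apply K.
    + intros y Hy. destruct (floor_nat (/ (b - y))) as [n [N1 N2]].
      { left. apply Rinv_0_lt_compat. lra. }
      exists (S n). destruct (K2 n) as [_ B].
      assert (/ INR (S n) < b - y).
      { rewrite S_INR. rewrite <- (Rinv_inv (b - y)).
        apply Rinv_lt_contravar.
        - apply Rmult_lt_0_compat; [apply Rinv_0_lt_compat; lra|].
          pose proof (pos_INR n). lra.
        - lra. }
      lra.
  - exists (fun n => c + INR n). repeat split.
    + simpl. ring.
    + intro n. apply rat_plus; auto. apply rat_INR.
    + intro n. rewrite S_INR. lra.
    + intros y _. destruct (Rle_dec 0 (y - c)) as [H|H].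
      * destruct (floor_nat (y - c) H) as [n [N1 N2]]. exists (S n). rewrite S_INR. lra.
      * exists O. simpl. lra.
Qed.

Lemma half_gadget c v : is_rational c -> ivr v c ->
  exists f, mono_bij (fun x => c <= x /\ ivr v x) (fun t => 0 <= t) f /\
            rat_pres (fun x => c <= x /\ ivr v x) f /\ f c = 0.
Proof.
  intros Rc Hc. destruct (seq_exists c v Rc Hc) as [r [R0 [RR [RI [RV RU]]]]].
  assert (RM : forall n m, (n < m)%nat -> r n < r m).
  { intros n m H. induction H. apply RI. specialize (RI m). lra. }
  assert (RM' : forall n m, (n <= m)%nat -> r n <= r m).
  { intros n m H. destruct (Nat.eq_dec n m); [subst; lra|]. left. apply RM. lia. }
  assert (RC : forall n, c <= r n) by (intro n; rewrite <- R0; apply RM'; lia).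
  assert (IE : forall y, c <= y -> ivr v y -> exists n, r n <= y < r (S n)).
  { intros y Hy1 Hy2. destruct (RU y Hy2) as [N HN]. clear RU.
    induction N as [|N IH].
    - lra.
    - destruct (Rle_dec (r N) y) as [H|H].
      + exists N. split; auto.
      + apply IH. lra. }
  assert (IU : forall y n m, r n <= y < r (S n) -> r m <= y < r (S m) -> n = m).
  { intros y n m [A B] [C D].
    destruct (Nat.lt_trichotomy n m) as [H|[H|H]]; auto.
    - assert (r (S n) <= r m) by (apply RM'; lia). lra.
    - assert (r (S m) <= r n) by (apply RM'; lia). lra. }
  pose (idx := fun y => match excluded_middle_informative (exists n, r n <= y < r (S n)) with
                        | left H => proj1_sig (constructive_indefinite_description _ H)
                        | right _ => O end).
  assert (IS : forall y, c <= y -> ivr v y -> r (idx y) <= y < r (S (idx y))).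
  { intros y H1 H2. unfold idx. destruct (excluded_middle_informative _) as [H|H].
    - destruct (constructive_indefinite_description _ _) as [n Hn]. exact Hn.
    - exfalso. apply H. apply IE; auto. }
  assert (IX : forall y n, c <= y -> ivr v y -> r n <= y < r (S n) -> idx y = n).
  { intros y n H1 H2 H3. apply (IU y); auto. }
  assert (DP : forall n, r (S n) - r n > 0) by (intro n; specialize (RI n); lra).
  exists (fun y => INR (idx y) + (y - r (idx y)) / (r (S (idx y)) - r (idx y))).
  assert (FR : forall y, c <= y -> ivr v y ->
     INR (idx y) <= INR (idx y) + (y - r (idx y)) / (r (S (idx y)) - r (idx y)) < INR (idx y) + 1).
  { intros y H1 H2. destruct (IS y H1 H2) as [A B]. specialize (DP (idx y)).
    split.
    - assert (0 <= (y - r (idx y)) / (r (S (idx y)) - r (idx y))).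
      { apply Rmult_le_pos; [lra| left; apply Rinv_0_lt_compat; lra]. } lra.
    - assert ((y - r (idx y)) / (r (S (idx y)) - r (idx y)) < 1).
      { apply Rmult_lt_reg_r with (r (S (idx y)) - r (idx y)); auto.
        unfold Rdiv. rewrite Rmult_assoc, Rinv_l; lra. } lra. }
  split; [repeat split|split].
  - intros y [H1 H2]. destruct (FR y H1 H2). pose proof (pos_INR (idx y)). lra.
  - intros t Ht. destruct (floor_nat t Ht) as [n [N1 N2]].
    specialize (DP n).
    set (y := r n + (t - INR n) * (r (S n) - r n)).
    assert (Y1 : r n <= y < r (S n)).
    { unfold y. split.
      - assert (0 <= (t - INR n) * (r (S n) - r n)) by (apply Rmult_le_pos; lra). lra.
      - assert ((t - INR n) * (r (S n) - r n) < 1 * (r (S n) - r n)) by (apply Rmult_lt_compat_r; lra). lra. }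
    assert (Y2 : c <= y) by (specialize (RC n); lra).
    assert (Y3 : ivr v y).
    { specialize (RV (S n)). destruct v; simpl in *; auto. lra. }
    exists y. split; [split; auto|].
    rewrite (IX y n Y2 Y3 Y1). unfold y. field. lra.
  - intros y1 y2 [A1 B1] [A2 B2] H.
    destruct (IS y1 A1 B1) as [C1 D1]. destruct (IS y2 A2 B2) as [C2 D2].
    destruct (FR y1 A1 B1) as [E1 E2]. destruct (FR y2 A2 B2) as [E3 E4].
    destruct (Nat.lt_trichotomy (idx y1) (idx y2)) as [L|[L|L]].
    + assert (INR (idx y1) + 1 <= INR (idx y2)).
      { rewrite <- S_INR. apply le_INR. lia. } lra.
    + rewrite <- L. apply Rplus_lt_compat_l. unfold Rdiv. apply Rmult_lt_compat_r.
      * apply Rinv_0_lt_compat. apply DP.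
      * rewrite <- L in *. lra.
    + assert (r (S (idx y2)) <= r (idx y1)) by (apply RM'; lia). lra.
  - intros y [H1 H2]. destruct (IS y H1 H2) as [A B].
    assert (DZ : r (S (idx y)) - r (idx y) <> 0) by (specialize (DP (idx y)); lra).
    split; intro K.
    + replace y with (r (idx y) + ((INR (idx y) + (y - r (idx y)) / (r (S (idx y)) - r (idx y))) - INR (idx y)) * (r (S (idx y)) - r (idx y))) by (field; auto).
      apply rat_plus; auto. apply rat_mult.
      * apply rat_minus; auto. apply rat_INR.
      * apply rat_minus; auto.
    + apply rat_plus; [apply rat_INR|]. apply rat_div; auto; apply rat_minus; auto.
  - assert (idx c = O).
    { apply IX; try lra; auto. rewrite R0. split; [lra|]. rewrite <- R0. apply RI. }
    rewrite H, R0. simpl. field. rewrite <- R0. specialize (DP O). lra.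
Qed.

Definition oneg (u : option R) : option R := match u with Some a => Some (- a) | None => None end.
Lemma ivr_neg u x : ivr (oneg u) (- x) <-> ivl u x.
Proof. destruct u; simpl; [split; intros; lra | tauto]. Qed.

Lemma iv_rat u v : ivlt u v -> exists c, is_rational c /\ iv u v c.
Proof.
  destruct u as [a|]; destruct v as [b|]; simpl; intros H.
  - destruct (rat_between a b H) as [c [[A B] C]]. exists c. unfold iv; simpl. auto.
  - destruct (rat_between a (a+1)) as [c [[A B] C]]; [lra|]. exists c. unfold iv; simpl. auto.
  - destruct (rat_between (b-1) b) as [c [[A B] C]]; [lra|]. exists c. unfold iv; simpl. auto.
  - exists 0. split; [exists 0%Q; unfold Q2R; simpl; field|]. unfold iv; simpl; auto.
Qed.

Lemma gadget u v : ivlt u v -> exists f, mono_bij (iv u v) (fun _ => True) f /\ rat_pres (iv u v) f.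
Proof.
  intros H. destruct (iv_rat u v H) as [c [Rc [Hu Hv]]].
  destruct (half_gadget c v Rc Hv) as [f1 [M1 [R1 Z1]]].
  destruct (half_gadget (- c) (oneg u) (rat_opp _ Rc) (proj2 (ivr_neg u c) Hu)) as [f2 [M2 [R2 Z2]]].
  pose proof (mb_refl _ _ _ M2) as M3. pose proof (rp_refl _ _ R2) as R3.
  assert (Ic : - c <= - c /\ ivr (oneg u) (- c)).
  { split; [lra|]. apply ivr_neg; auto. }
  pose proof (mb_remove _ _ _ c M3 Ic) as M4.
  assert (M5 : mono_bij (fun x => ivl u x /\ x < c) (fun y => y < 0) (fun x => - f2 (- x))).
  { eapply mb_ext; [exact M4| |].
    - intro x. cbv beta. rewrite ivr_neg. split; [intros [[A B] C]; split; auto; lra| intros [A B]; repeat split; auto; lra].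
    - intro y. cbv beta. rewrite Z2. split; [intros [A B]; lra| intros A; split; lra]. }
  assert (R5 : rat_pres (fun x => ivl u x /\ x < c) (fun x => - f2 (- x))).
  { eapply rp_ext; [exact R3|]. intros x [A B]. split; [lra|]. apply ivr_neg; auto. }
  pose proof (mb_glue _ _ _ _ _ _ M5 M1) as M6.
  pose proof (rp_glue _ _ _ _ R5 R1) as R6.
  specialize (M6 ltac:(intros x y [A B] [C D]; lra) ltac:(intros x y A B; lra)).
  eexists. split.
  - eapply mb_ext; [apply M6| |].
    + intro x. unfold iv. split.
      * intros [[A B]|[A B]]; split; auto.
        -- destruct v; simpl in *; auto. lra.
        -- destruct u; simpl in *; auto. lra.
      * intros [A B]. destruct (Rlt_le_dec x c); [left; auto|right; auto].
    + intro y. split; auto. intros _. destruct (Rlt_le_dec y 0); auto.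
  - eapply rp_ext; [apply R6|]. intros x [A B]. destruct (Rlt_le_dec x c); [left; auto|right; auto].
Qed.

Lemma mb_interval u v u' v' : ivlt u v -> ivlt u' v' ->
  exists f, mono_bij (iv u v) (iv u' v') f /\ rat_pres (iv u v) f.
Proof.
  intros H H'. destruct (gadget u v H) as [f1 [M1 R1]]. destruct (gadget u' v' H') as [f2 [M2 R2]].
  destruct (mb_inv _ _ _ M2) as [g2 [N2 [_ [_ RR]]]].
  exists (fun x => g2 (f1 x)). split.
  - eapply mb_comp; eauto.
  - eapply rp_comp; eauto.
Qed.

Lemma mb_two u c v u' c' v' : ivl u c -> ivr v c -> ivl u' c' -> ivr v' c' ->
  exists f, mono_bij (fun x => iv u (Some c) x \/ iv (Some c) v x) (fun y => iv u' (Some c') y \/ iv (Some c') v' y) f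
    /\ rat_pres (fun x => iv u (Some c) x \/ iv (Some c) v x) f.
Proof.
  intros H1 H2 H3 H4.
  destruct (mb_interval u (Some c) u' (Some c')) as [f1 [M1 R1]].
  { destruct u; simpl in *; auto. } { destruct u'; simpl in *; auto. }
  destruct (mb_interval (Some c) v (Some c') v') as [f2 [M2 R2]].
  { destruct v; simpl in *; auto. } { destruct v'; simpl in *; auto. }
  exists (fun x => if excluded_middle_informative (iv u (Some c) x) then f1 x else f2 x). split.
  - apply mb_glue; [exact M1|exact M2| |].
    + intros x y [_ A] [B _]. simpl in *. lra.
    + intros x y [_ A] [B _]. simpl in *. lra.
  - apply rp_glue; auto.
Qed.

Lemma mb_cont D E f : mono_bij D E f -> R_open E -> forall x, D x -> forall eps, eps > 0 ->
  exists del, del > 0 /\ forall x', D x' -> Rabs (x' - x) < del -> Rabs (f x' - f x) < eps.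
Proof.
  intros MB HE x Dx eps Heps. pose proof MB as [M1 [M2 M3]].
  destruct (HE (f x) (M1 x Dx)) as [e [He Be]].
  set (e' := Rmin e eps / 2).
  assert (He' : 0 < e' /\ e' < e /\ e' < eps).
  { unfold e', Rmin. destruct (Rle_dec e eps); lra. }
  assert (E1 : E (f x - e')) by (apply Be; replace (f x - e' - f x) with (- e') by ring; rewrite Rabs_Ropp, Rabs_right; lra).
  assert (E2 : E (f x + e')) by (apply Be; replace (f x + e' - f x) with e' by ring; rewrite Rabs_right; lra).
  destruct (M2 _ E1) as [x1 [D1 F1]]. destruct (M2 _ E2) as [x2 [D2 F2]].
  assert (L1 : x1 < x) by (apply (mb_le D E f); auto; lra).
  assert (L2 : x < x2) by (apply (mb_le D E f); auto; lra).
  exists (Rmin (x - x1) (x2 - x)). split.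
  - unfold Rmin. destruct (Rle_dec _ _); lra.
  - intros x' D' Hx'. apply Rabs_def2 in Hx'. destruct Hx' as [A B].
    assert (x1 < x' /\ x' < x2) as [C1 C2]. { unfold Rmin in *. destruct (Rle_dec (x - x1) (x2 - x)). all: split; lra. }
    pose proof (M3 _ _ D1 D' C1). pose proof (M3 _ _ D' D2 C2).
    apply Rabs_def1; lra.
Qed.

Lemma mb_sub_cont (T : R -> Prop) D E f : mono_bij D E f -> R_open D -> R_open E ->
  forall U, R_open U -> R_open (fun x => D x /\ U (f x)).
Proof.
  intros MB HD HE U HU x [Dx Ux].
  destruct (HU _ Ux) as [e [He Be]].
  destruct (mb_cont D E f MB HE x Dx e He) as [d1 [Hd1 B1]].
  destruct (HD x Dx) as [d2 [Hd2 B2]].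
  exists (Rmin d1 d2). split; [unfold Rmin; destruct (Rle_dec _ _); lra|].
  intros y Hy.
  assert (Rabs (y - x) < d1 /\ Rabs (y - x) < d2) as [A B] by (unfold Rmin in Hy; destruct (Rle_dec _ _); split; lra).
  assert (Dy : D y) by auto. split; [exact Dy| apply Be; auto].
Qed.

Lemma mb_homeo (T : R -> Prop) D E f : R_open D -> R_open E -> mono_bij D E f ->
  (forall x, D x -> (T (f x) <-> T x)) ->
  homeomorphic (subspace R_top (fun x => T x /\ D x)) (subspace R_top (fun x => T x /\ E x)).
Proof.
  intros HD HE MB TP.
  destruct (mb_inv _ _ _ MB) as [g [MG [GF [FG _]]]].
  assert (TG : forall y, E y -> (T (g y) <-> T y)).
  { intros y Ey. pose proof MG as [G1 _]. rewrite <- (TP _ (G1 y Ey)), FG; auto. tauto. }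
  pose proof MB as [F1 _]. pose proof MG as [G1 _].
  assert (K1 : forall x : {x | T x /\ D x}, T (f (proj1_sig x)) /\ E (f (proj1_sig x))).
  { intros [x [Tx Dx]]. simpl. split; auto. apply TP; auto. }
  assert (K2 : forall y : {y | T y /\ E y}, T (g (proj1_sig y)) /\ D (g (proj1_sig y))).
  { intros [y [Ty Ey]]. simpl. split; auto. apply TG; auto. }
  exists (fun x => exist _ (f (proj1_sig x)) (K1 x)), (fun y => exist _ (g (proj1_sig y)) (K2 y)).
  repeat split.
  - intros [x [Tx Dx]]. sig_eq. auto.
  - intros [y [Ty Ey]]. sig_eq. auto.
  - intros V [U [HU EU]]. exists (fun x => D x /\ U (f x)). split.
    + apply (mb_sub_cont T D E f); auto.
    + intros [x [Tx Dx]]. simpl. rewrite EU. simpl. tauto.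
  - intros V [U [HU EU]]. exists (fun y => E y /\ U (g y)). split.
    + apply (mb_sub_cont T E D g); auto.
    + intros [y [Ty Ey]]. simpl. rewrite EU. simpl. tauto.
Qed.

Lemma rp_Sp b D f : rat_pres D f -> forall x, D x -> (Sp b (f x) <-> Sp b x).
Proof. intros R x Dx. destruct b; simpl; rewrite (R x Dx); tauto. Qed.

Lemma open_two u c v : R_open (fun x => iv u (Some c) x \/ iv (Some c) v x).
Proof. apply (open_or R_top); apply iv_open. Qed.

Lemma proj_inj {A : Type} {P : A -> Prop} (x y : {a | P a}) : proj1_sig x = proj1_sig y -> x = y.
Proof. intros E. apply eq_sig_hprop; auto. intros; apply proof_irrelevance. Qed.

Lemma card_sub (S : R -> Prop) (x0 : subspace R_top S) :
  homeomorphic (card (subspace R_top S) x0) (subspace R_top (fun x => S x /\ x <> proj1_sig x0)).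
Proof.
  apply sub_sub. intros y. split.
  - intros H E. apply H. apply proj_inj. exact E.
  - intros H E. apply H. rewrite E. reflexivity.
Qed.

Lemma cardX_X b (x0 : subspace R_top (Sp b)) : homeomorphic (card (subspace R_top (Sp b)) x0) (subspace R_top (Sp b)).
Proof.
  eapply homeo_trans; [apply card_sub|]. set (c0 := proj1_sig x0).
  destruct (nSp_between b 0 1) as [al [_ Hal]]; [lra|].
  destruct (mb_two None c0 None None al None) as [f [M R]]; simpl; auto.
  eapply homeo_trans.
  { apply (sub_ext R_top _ (fun x => Sp b x /\ (iv None (Some c0) x \/ iv (Some c0) None x))).
    intro x. unfold iv; simpl. split.
    - intros [A B]. split; auto. destruct (Rtotal_order x c0) as [H|[H|H]]; [left|contradiction|right]; tauto.
    - intros [A [[_ B]|[B _]]]; split; auto; lra. }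
  eapply homeo_trans.
  { exact (mb_homeo (Sp b) _ _ f (open_two _ _ _) (open_two _ _ _) M (rp_Sp b _ f R)). }
  apply sub_ext. intro x. unfold iv; simpl. split.
  - tauto.
  - intros A. split; auto. destruct (Rtotal_order x al) as [H|[H|H]]; [left|subst; contradiction|right]; tauto.
Qed.

Lemma transport (Z : TopSpace) (z : Z) (S : R -> Prop)
  (h : card Z z -> subspace R_top S) (hi : subspace R_top S -> card Z z) :
  (forall x, hi (h x) = x) -> (forall y, h (hi y) = y) -> continuous _ _ h -> continuous _ _ hi ->
  forall P : R -> Prop,
  homeomorphic (subspace Z (fun x => exists H : x <> z, P (proj1_sig (h (exist _ x H)))))
               (subspace R_top (fun x => S x /\ P x)).
Proof.
  intros H1 H2 H3 H4 P.
  assert (E1 : forall y : card Z z, P (proj1_sig (h y)) <->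
     (fun x => exists H : x <> z, P (proj1_sig (h (exist _ x H)))) (proj1_sig y)).
  { intros [y Hy]. simpl. split.
    - intros A. exists Hy. exact A.
    - intros [H' A]. replace Hy with H' by apply proof_irrelevance. exact A. }
  eapply homeo_trans.
  { apply sub_ext with (B := fun x => x <> z /\ exists H : x <> z, P (proj1_sig (h (exist _ x H)))).
    intros x. split; [intros [H A]; split; [exact H|exists H; exact A] | intros [_ A]; exact A]. }
  eapply homeo_trans; [apply homeo_sym; apply (sub_sub Z (fun x => x <> z) _ _ E1)|].
  eapply homeo_trans; [apply (sub_homeo _ _ _ h hi H1 H2 H3 H4)|].
  eapply homeo_trans.
  { apply sub_ext with (B := fun t => P (proj1_sig t)). intro t. rewrite H2. tauto. }
  apply sub_sub. tauto.
Qed.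

Theorem recon_S b : reconstructible (subspace R_top (Sp b)).
Proof.
  intros Z HZ.
  set (X := subspace R_top (Sp b)).
  destruct (Sp_between b 0 1) as [s1 [[A1 A1'] S1]]; [lra|].
  destruct (Sp_between b 1 2) as [s2 [[A2 _] S2]]; [lra|].
  destruct (deck2 _ _ HZ (exist _ s1 S1 : X)) as [z Hz].
  assert (HZX : homeomorphic (card Z z) X).
  { eapply homeo_trans; [apply homeo_sym; exact Hz| apply cardX_X]. }
  destruct HZX as [h [hi [H1 [H2 [H3 H4]]]]].
  set (a := proj1_sig (hi (exist _ s1 S1 : X))).
  set (c := proj1_sig (hi (exist _ s2 S2 : X))).
  assert (Haz : a <> z) by exact (proj2_sig (hi (exist _ s1 S1 : X))).
  assert (Hcz : c <> z) by exact (proj2_sig (hi (exist _ s2 S2 : X))).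
  assert (Hac : a <> c).
  { intro E. apply proj_inj in E. apply (f_equal h) in E. rewrite !H2 in E.
    apply (f_equal (@proj1_sig _ _)) in E. simpl in E. lra. }
  assert (HX : hausdorff X) by (apply hausdorff_sub, R_hausdorff).
  assert (HC : forall t, hausdorff (card Z t)).
  { intro t. destruct (deck1 _ _ HZ t) as [x Hx].
    eapply hausdorff_homeo; [|exact HX]. eapply homeo_trans; [exact Hx| apply cardX_X]. }
  destruct (sep_Z Z z a c (fun e => Haz (eq_sym e)) (fun e => Hcz (eq_sym e)) Hac HC) as [T1Z HZH].
  set (w := a).
  set (p := proj1_sig (h (exist (fun y => y <> z) w Haz))).
  assert (Sp_p : Sp b p) by exact (proj2_sig (h (exist (fun y => y <> z) w Haz))).
  assert (hw : h (exist (fun y => y <> z) w Haz) = exist _ s1 S1).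
  { assert (E : exist (fun y => y <> z) w Haz = hi (exist _ s1 S1 : X)) by (apply proj_inj; reflexivity).
    rewrite E, H2. reflexivity. }
  destruct (HZH w z Haz) as [Vw [Vz [HVw [HVz [Vww [Vzz D]]]]]].
  destruct (open_to_sub Z X _ hi Vw H4 HVw) as [O [HO EO]].
  assert (Op : O p).
  { unfold p. apply (EO (h (exist (fun y => y <> z) w Haz))). rewrite H1. exact Vww. }
  destruct (HO p Op) as [eps [Heps Beps]].
  destruct (nSp_between b (p - eps) p) as [a0 [[A0 A0'] Na0]]; [lra|].
  destruct (nSp_between b p (p + eps)) as [b0 [[B0 B0'] Nb0]]; [lra|].
  destruct (nSp_between b a0 p) as [c0 [[C0 C0'] Nc0]]; [lra|].
  set (P := fun y => a0 < y < b0).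
  set (C := fun x => exists H : x <> z, P (proj1_sig (h (exist _ x H)))).
  assert (Cw : C w) by (exists Haz; unfold P; fold p; split; lra).
  assert (CV : forall x, C x -> Vw x).
  { intros x [H HP]. pose proof (EO (h (exist _ x H))) as E. rewrite H1 in E. apply E.
    apply Beps. unfold P in HP. apply Rabs_def1; lra. }
  assert (OC : is_open Z C).
  { apply (open_from_sub Z X _ h (fun t => P (proj1_sig t))); auto.
    exists (iv (Some a0) (Some b0)). split; [apply iv_open|]. intros y. unfold P, iv; simpl. tauto. }
  assert (OnC : is_open Z (fun x => ~ C x)).
  { apply open_ext with (fun x => Vz x \/ exists H : x <> z, (fun y => y < a0 \/ b0 < y) (proj1_sig (h (exist _ x H)))).
    - apply open_or; auto.
      apply (open_from_sub Z X _ h (fun t => proj1_sig t < a0 \/ b0 < proj1_sig t)); auto.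
      exists (fun y => y < a0 \/ b0 < y). split; [|tauto].
      apply (open_or R_top).
      + eapply (open_ext R_top); [apply (iv_open None (Some a0))| intro; unfold iv; simpl; tauto].
      + eapply (open_ext R_top); [apply (iv_open (Some b0) None)| intro; unfold iv; simpl; tauto].
    - intro x. split.
      + intros [Hx|[H Hq]].
        * intro Cx. apply (D x); auto.
        * intros [H' HP]. replace H' with H in HP by apply proof_irrelevance. unfold P in HP. simpl in Hq. destruct HP; destruct Hq; simpl in *; lra.
      + intros nC. destruct (classic (x = z)) as [->|Hxz]; [left; auto|right].
        exists Hxz. simpl. set (y := h (exist _ x Hxz)).
        assert (Sy : Sp b (proj1_sig y)) by exact (proj2_sig y).
        destruct (Rlt_le_dec (proj1_sig y) a0) as [L|L]; [left; auto|].
        destruct (Rle_lt_dec (proj1_sig y) b0) as [L'|L']; [|right; auto].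
        exfalso. apply nC. exists Hxz. fold y. unfold P.
        destruct L as [L|L]; [|rewrite <- L in Sy; contradiction].
        destruct L' as [L'|L']; [|rewrite L' in Sy; contradiction]. lra. }
  assert (AB : homeomorphic Z (card Z w)).
  { apply (absorb Z C w OC OnC Cw).
    eapply homeo_trans; [apply (transport Z z _ h hi H1 H2 H3 H4 P)|].
    apply homeo_sym.
    eapply homeo_trans.
    { apply sub_ext with (B := fun x => exists H : x <> z, (fun y => P y /\ y <> p) (proj1_sig (h (exist _ x H)))).
      intro x. split.
      - intros [[H HP] Hxw]. exists H. split; auto. intro E. apply Hxw.
        assert (E' : h (exist _ x H) = h (exist (fun y => y <> z) w Haz)) by (apply proj_inj; exact E).
        apply (f_equal hi) in E'. rewrite !H1 in E'. apply (f_equal (@proj1_sig _ _)) in E'. exact E'.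
      - intros [H [HP Hp]]. split; [exists H; exact HP|]. intro E. subst x. apply Hp.
        unfold p. replace H with Haz by apply proof_irrelevance. reflexivity. }
    eapply homeo_trans; [apply (transport Z z _ h hi H1 H2 H3 H4 (fun y => P y /\ y <> p))|].
    destruct (mb_two (Some a0) c0 (Some b0) (Some a0) p (Some b0)) as [f [M R]]; simpl; try lra.
    eapply homeo_trans.
    { apply (sub_ext R_top _ (fun x => Sp b x /\ (iv (Some a0) (Some p) x \/ iv (Some p) (Some b0) x))).
      intro x. unfold iv, P; simpl. split.
      - intros [A [B E]]. split; auto. destruct (Rtotal_order x p) as [H|[H|H]]; [left|contradiction|right]; lra.
      - intros [A [[B E]|[B E]]]; split; auto; split; lra. }
    eapply homeo_trans.
    { apply homeo_sym. exact (mb_homeo (Sp b) _ _ f (open_two (Some a0) c0 (Some b0)) (open_two (Some a0) p (Some b0)) M (rp_Sp b _ f R)). }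
    apply sub_ext. intro x. unfold iv, P; simpl. split.
    - intros [A B]. split; auto. destruct B as [[B E]|[B E]]; lra.
    - intros [A B]. split; auto. destruct (Rtotal_order x c0) as [H|[H|H]]; [left|subst; contradiction|right]; lra. }
  destruct (deck1 _ _ HZ w) as [x Hx].
  eapply homeo_trans; [exact AB|]. eapply homeo_trans; [exact Hx| apply cardX_X].
Qed.

Definition cont_on (D : R -> Prop) (f : R -> R) : Prop :=
  forall x, D x -> forall e, e > 0 -> exists d, d > 0 /\
    forall y, D y -> Rabs (y - x) < d -> Rabs (f y - f x) < e.

Lemma cont_on_sub D D' f : cont_on D f -> (forall x, D' x -> D x) -> cont_on D' f.
Proof.
  intros C S x Dx e He. destruct (C x (S x Dx) e He) as [d [Hd B]].
  exists d. split; auto.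
Qed.

Lemma abs_le_inv x B : Rabs x <= B -> - B <= x <= B.
Proof. unfold Rabs; destruct (Rcase_abs x); intros; split; lra. Qed.
Lemma abs_lt_inv x B : Rabs x < B -> - B < x < B.
Proof. unfold Rabs; destruct (Rcase_abs x); intros; split; lra. Qed.

Definition clamp a b x := Rmax a (Rmin b x).

Lemma clamp_prop a b x : a <= b -> a <= clamp a b x <= b.
Proof. intros. unfold clamp, Rmax, Rmin. repeat destruct (Rle_dec _ _); lra. Qed.
Lemma clamp_id a b x : a <= x <= b -> clamp a b x = x.
Proof. intros. unfold clamp, Rmax, Rmin. repeat destruct (Rle_dec _ _); lra. Qed.
Lemma clamp_lip a b x y : a <= b -> Rabs (clamp a b x - clamp a b y) <= Rabs (x - y).
Proof.
  intros. unfold clamp, Rmax, Rmin.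
  repeat destruct (Rle_dec _ _); unfold Rabs; repeat destruct (Rcase_abs _); lra.
Qed.

Lemma ivt_up a b f y : a <= b -> cont_on (fun x => a <= x <= b) f -> f a <= y <= f b ->
  exists c, a <= c <= b /\ f c = y.
Proof.
  intros Hab C [Y1 Y2].
  destruct (Req_dec (f a) y) as [E|E]; [exists a; split; auto; lra|].
  destruct (Req_dec (f b) y) as [E'|E']; [exists b; split; auto; lra|].
  assert (Hab' : a < b) by (destruct Hab; auto; subst; lra).
  set (F := fun x => f (clamp a b x) - y).
  assert (CF : continuity F).
  { intro x0. unfold continuity_pt, continue_in, limit1_in, limit_in. simpl. unfold R_dist.
    intros eps Heps.
    destruct (C (clamp a b x0) (clamp_prop a b x0 Hab) eps Heps) as [d [Hd B]].
    exists d. split; auto. intros x [_ Hx]. unfold F.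
    replace (f (clamp a b x) - y - (f (clamp a b x0) - y)) with (f (clamp a b x) - f (clamp a b x0)) by ring.
    apply B; [apply clamp_prop; auto|].
    pose proof (clamp_lip a b x x0 Hab). lra. }
  destruct (IVT F a b CF Hab') as [c [Hc Fc]].
  - unfold F. rewrite clamp_id; lra.
  - unfold F. rewrite clamp_id; lra.
  - exists c. split; auto. unfold F in Fc. rewrite clamp_id in Fc; auto. lra.
Qed.

Lemma ivt_down a b f y : a <= b -> cont_on (fun x => a <= x <= b) f -> f b <= y <= f a ->
  exists c, a <= c <= b /\ f c = y.
Proof.
  intros Hab C [Y1 Y2].
  destruct (ivt_up a b (fun x => - f x) (- y) Hab) as [c [Hc E]].
  - intros x Hx e He. destruct (C x Hx e He) as [d [Hd B]]. exists d. split; auto.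
    intros z Hz Hd'. replace (- f z - - f x) with (- (f z - f x)) by ring. rewrite Rabs_Ropp. auto.
  - lra.
  - exists c. split; auto. lra.
Qed.

Lemma ivt a b f y : a <= b -> cont_on (fun x => a <= x <= b) f ->
  (f a <= y <= f b \/ f b <= y <= f a) -> exists c, a <= c <= b /\ f c = y.
Proof. intros H C [A|A]; [apply ivt_up|apply ivt_down]; auto. Qed.

Lemma cont_affine I J f al be : cont_on I f -> (forall t, J t -> I (al + t * be)) ->
  cont_on J (fun t => f (al + t * be)).
Proof.
  intros C S t0 Jt0 e He.
  destruct (C _ (S t0 Jt0) e He) as [d [Hd B]].
  exists (d / (Rabs be + 1)). split.
  - apply Rdiv_lt_0_compat; auto. pose proof (Rabs_pos be). lra.
  - intros t Jt Ht. apply B; auto.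
    replace (al + t * be - (al + t0 * be)) with ((t - t0) * be) by ring.
    rewrite Rabs_mult.
    pose proof (Rabs_pos be). pose proof (Rabs_pos (t - t0)).
    assert (Rabs (t - t0) * (Rabs be + 1) < d).
    { apply Rmult_lt_reg_r with (/ (Rabs be + 1)).
      - apply Rinv_0_lt_compat. lra.
      - rewrite Rmult_assoc, Rinv_r; [|lra]. rewrite Rmult_1_r. exact Ht. }
    nra.
Qed.

Lemma convex_help l r x a t : l < x < r -> l < a < r -> 0 <= t <= 1 -> l < x + t * (a - x) < r.
Proof.
  intros [A B] [C D] [E F].
  assert (0 <= (1 - t) * (x - l)) by (apply Rmult_le_pos; lra).
  assert (0 <= t * (a - l)) by (apply Rmult_le_pos; lra).
  assert (0 <= (1 - t) * (r - x)) by (apply Rmult_le_pos; lra).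
  assert (0 <= t * (r - a)) by (apply Rmult_le_pos; lra).
  destruct (Req_dec t 0); [subst; split; lra|].
  assert (0 < t * (a - l)) by (apply Rmult_lt_0_compat; lra).
  assert (0 < t * (r - a)) by (apply Rmult_lt_0_compat; lra).
  split; nra.
Qed.

Lemma inj_mono l r f : cont_on (fun x => l < x < r) f ->
  (forall x y, l < x < r -> l < y < r -> f x = f y -> x = y) ->
  (forall x y, l < x < r -> l < y < r -> x < y -> f x < f y) \/
  (forall x y, l < x < r -> l < y < r -> x < y -> f y < f x).
Proof.
  intros C Inj.
  destruct (classic (forall x y, l < x < r -> l < y < r -> x < y -> f x < f y)) as [H|H]; [left; auto|].
  right. intros x y Hx Hy Hxy.
  destruct (Rlt_le_dec (f y) (f x)) as [K|K]; auto. exfalso.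
  assert (K' : f x < f y).
  { destruct K; auto. apply Inj in H0; auto. lra. }
  apply H. intros a b Ha Hb Hab.
  destruct (Rlt_le_dec (f a) (f b)) as [K2|K2]; auto. exfalso.
  assert (K2' : f b < f a).
  { destruct K2; auto. apply Inj in H0; auto. lra. }
  set (G1 := fun t => f (x + t * (a - x))).
  set (G2 := fun t => f (y + t * (b - y))).
  assert (CG1 : cont_on (fun t => 0 <= t <= 1) G1).
  { apply (cont_affine (fun x => l < x < r)); auto. intros t Ht. apply convex_help; auto. }
  assert (CG2 : cont_on (fun t => 0 <= t <= 1) G2).
  { apply (cont_affine (fun x => l < x < r)); auto. intros t Ht. apply convex_help; auto. }
  assert (CG : cont_on (fun t => 0 <= t <= 1) (fun t => G2 t - G1 t)).
  { intros t Ht e He. destruct (CG1 t Ht (e/2)) as [d1 [Hd1 B1]]; [lra|].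
    destruct (CG2 t Ht (e/2)) as [d2 [Hd2 B2]]; [lra|].
    exists (Rmin d1 d2). split; [unfold Rmin; destruct (Rle_dec _ _); lra|].
    intros u Hu Hd. assert (Rabs (u - t) < d1 /\ Rabs (u - t) < d2) as [A B] by (unfold Rmin in Hd; destruct (Rle_dec _ _); split; lra).
    specialize (B1 u Hu A). specialize (B2 u Hu B).
    replace (G2 u - G1 u - (G2 t - G1 t)) with ((G2 u - G2 t) - (G1 u - G1 t)) by ring.
    pose proof (Rabs_triang (G2 u - G2 t) (- (G1 u - G1 t))). rewrite Rabs_Ropp in H0.
    replace (G2 u - G2 t - (G1 u - G1 t)) with (G2 u - G2 t + - (G1 u - G1 t)) by ring. lra. }
  destruct (ivt_down 0 1 (fun t => G2 t - G1 t) 0) as [t [Ht E]]; [lra|auto| |].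
  { unfold G1, G2. replace (x + 0 * (a - x)) with x by ring. replace (y + 0 * (b - y)) with y by ring.
    replace (x + 1 * (a - x)) with a by ring. replace (y + 1 * (b - y)) with b by ring. split; lra. }
  unfold G1, G2 in E.
  assert (E' : f (y + t * (b - y)) = f (x + t * (a - x))) by lra.
  apply Inj in E'; [| apply convex_help; auto | apply convex_help; auto].
  assert (0 <= (1 - t) * (y - x)) by (apply Rmult_le_pos; lra).
  assert (0 <= t * (b - a)) by (apply Rmult_le_pos; lra).
  destruct (Req_dec t 0); [subst; lra|].
  assert (0 < t * (b - a)) by (apply Rmult_lt_0_compat; lra).
  nra.
Qed.

Lemma mono_lim_inc f e m : e > 0 -> (forall s t, 0 < s < e -> 0 < t < e -> s < t -> f s < f t) ->
  (forall t, 0 < t < e -> m <= f t) ->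
  exists L, forall eta, eta > 0 -> exists d, d > 0 /\ d <= e /\ forall t, 0 < t < d -> Rabs (f t - L) < eta.
Proof.
  intros He Inc Bd.
  set (E := fun v => exists t, 0 < t < e /\ v = - f t).
  destruct (completeness E) as [M [HM1 HM2]].
  - exists (- m). intros v [t [Ht ->]]. specialize (Bd t Ht). lra.
  - exists (- f (e/2)). exists (e/2). split; auto. lra.
  - exists (- M). intros eta Heta.
    destruct (classic (exists t, 0 < t < e /\ - f t > M - eta)) as [[t0 [Ht0 Hf]]|NE].
    + exists t0. repeat split; try lra. intros t Ht.
      assert (- f t <= M) by (apply HM1; exists t; split; auto; lra).
      assert (f t < f t0) by (apply Inc; lra).
      apply Rabs_def1; lra.
    + exfalso. assert (M <= M - eta); [|lra].
      apply HM2. intros v [t [Ht ->]]. destruct (Rle_dec (- f t) (M - eta)); auto.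
      exfalso. apply NE. exists t. split; auto. lra.
Qed.

Lemma mono_lim f e B : e > 0 ->
  ((forall s t, 0 < s < e -> 0 < t < e -> s < t -> f s < f t) \/
   (forall s t, 0 < s < e -> 0 < t < e -> s < t -> f t < f s)) ->
  (forall t, 0 < t < e -> Rabs (f t) <= B) ->
  exists L, forall eta, eta > 0 -> exists d, d > 0 /\ d <= e /\ forall t, 0 < t < d -> Rabs (f t - L) < eta.
Proof.
  intros He [Inc|Dec] Bd.
  - apply (mono_lim_inc f e (- B)); auto. intros t Ht. specialize (Bd t Ht).
    apply abs_le_inv in Bd. lra.
  - destruct (mono_lim_inc (fun t => - f t) e (- B)) as [L HL]; auto.
    + intros s t Hs Ht Hst. specialize (Dec s t Hs Ht Hst). lra.
    + intros t Ht. specialize (Bd t Ht). apply abs_le_inv in Bd. lra.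
    + exists (- L). intros eta Heta. destruct (HL eta Heta) as [d [Hd [Hde Hb]]].
      exists d. repeat split; auto. intros t Ht. specialize (Hb t Ht).
      replace (f t - - L) with (- (- f t - L)) by ring. rewrite Rabs_Ropp. auto.
Qed.

Lemma conn (I U V : R -> Prop) : (forall a b c, I a -> I c -> a <= b <= c -> I b) ->
  R_open U -> R_open V -> (forall x, I x -> U x \/ V x) -> (forall x, I x -> U x -> V x -> False) ->
  forall a c, I a -> I c -> U a -> V c -> False.
Proof.
  intros Conv HU HV Cov Dis.
  assert (K : forall U V, R_open U -> R_open V -> (forall x, I x -> U x \/ V x) -> (forall x, I x -> U x -> V x -> False) ->
            forall a c, a < c -> I a -> I c -> U a -> V c -> False).
  { clear U V HU HV Cov Dis. intros U V HU HV Cov Dis a c Hac Ia Ic Ua Vc.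
    set (chi := fun x => if excluded_middle_informative (U x) then 0 else 1).
    assert (Cc : cont_on (fun x => a <= x <= c) chi).
    { intros x Hx e He. assert (Ix : I x) by (apply (Conv a x c); auto).
      destruct (Cov x Ix) as [Ux|Vx].
      - destruct (HU x Ux) as [d [Hd B]]. exists d. split; auto. intros y Hy Hd'.
        unfold chi. destruct (excluded_middle_informative (U y)); [|exfalso; auto].
        destruct (excluded_middle_informative (U x)); [|contradiction].
        rewrite Rminus_diag, Rabs_R0. auto.
      - destruct (HV x Vx) as [d [Hd B]]. exists d. split; auto. intros y Hy Hd'.
        assert (Iy : I y) by (apply (Conv a y c); auto).
        unfold chi. destruct (excluded_middle_informative (U y)) as [Uy|Uy].
        + exfalso. apply (Dis y); auto.
        + destruct (excluded_middle_informative (U x)) as [Ux|Ux].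
          * exfalso. apply (Dis x); auto.
          * rewrite Rminus_diag, Rabs_R0. auto. }
    destruct (ivt_up a c chi (1/2)) as [x [Hx E]]; [lra|auto| |].
    - unfold chi. destruct (excluded_middle_informative (U a)); [|contradiction].
      destruct (excluded_middle_informative (U c)); [exfalso; apply (Dis c); auto|]. split; lra.
    - unfold chi in E. destruct (excluded_middle_informative (U x)); lra. }
  intros a c Ia Ic Ua Vc.
  destruct (Rtotal_order a c) as [H|[H|H]].
  - apply (K U V HU HV Cov Dis a c); auto.
  - subst. apply (Dis c); auto.
  - apply (K V U HV HU) with c a; auto.
    + intros x Ix. destruct (Cov x Ix); auto.
    + intros x Ix A B. apply (Dis x); auto.
Qed.

Lemma no3_half (H A B C : R -> Prop) : (forall a b c, H a -> H c -> a <= b <= c -> H b) ->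
  R_open A -> R_open B -> R_open C ->
  (forall y, H y -> A y \/ B y \/ C y) ->
  (forall y, H y -> A y -> B y -> False) -> (forall y, H y -> A y -> C y -> False) ->
  (forall y, H y -> B y -> C y -> False) ->
  (exists y, H y /\ A y) -> (exists y, H y /\ B y) -> False.
Proof.
  intros Conv HA HB HC Cov D1 D2 D3 [a [Ha Aa]] [c [Hc Bc]].
  apply (conn H A (fun y => B y \/ C y) Conv HA (open_or R_top B C HB HC)) with a c; auto.
  - intros y Hy A' [B'|C']; eauto.
Qed.

Lemma no3 (x : R) (A B C : R -> Prop) : R_open A -> R_open B -> R_open C ->
  (forall y, y <> x -> A y \/ B y \/ C y) ->
  (forall y, y <> x -> A y -> B y -> False) -> (forall y, y <> x -> A y -> C y -> False) ->
  (forall y, y <> x -> B y -> C y -> False) ->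
  (exists y, y <> x /\ A y) -> (exists y, y <> x /\ B y) -> (exists y, y <> x /\ C y) -> False.
Proof.
  intros HA HB HC Cov D1 D2 D3 [a [Ha Aa]] [b [Hb Bb]] [c [Hc Cc]].
  assert (P : forall H : R -> Prop, (forall a b c, H a -> H c -> a <= b <= c -> H b) -> (forall y, H y -> y <> x) ->
     ((exists y, H y /\ A y) -> (exists y, H y /\ B y) -> False) /\
     ((exists y, H y /\ A y) -> (exists y, H y /\ C y) -> False) /\
     ((exists y, H y /\ B y) -> (exists y, H y /\ C y) -> False)).
  { intros H Conv Hx.
    assert (T : forall y, H y -> y <> x) by exact Hx.
    split; [|split].
    - apply (no3_half H A B C Conv HA HB HC).
      all: intros y Hy; first [ solve [destruct (Cov y (Hx y Hy)) as [?|[?|?]]; auto]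
        | intros ? ?; first [solve [eapply (D1 y); eauto] | solve [eapply (D2 y); eauto] | solve [eapply (D3 y); eauto]] ].
    - apply (no3_half H A C B Conv HA HC HB).
      all: intros y Hy; first [ solve [destruct (Cov y (Hx y Hy)) as [?|[?|?]]; auto]
        | intros ? ?; first [solve [eapply (D1 y); eauto] | solve [eapply (D2 y); eauto] | solve [eapply (D3 y); eauto]] ].
    - apply (no3_half H B C A Conv HB HC HA).
      all: intros y Hy; first [ solve [destruct (Cov y (Hx y Hy)) as [?|[?|?]]; auto]
        | intros ? ?; first [solve [eapply (D1 y); eauto] | solve [eapply (D2 y); eauto] | solve [eapply (D3 y); eauto]] ]. }
  destruct (P (fun y => y < x)) as [L1 [L2 L3]]; [intros; lra| intros; lra|].
  destruct (P (fun y => x < y)) as [R1 [R2 R3]]; [intros; lra| intros; lra|].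
  destruct (Rtotal_order a x) as [La|[La|La]]; [|contradiction|];
  destruct (Rtotal_order b x) as [Lb|[Lb|Lb]]; try contradiction;
  destruct (Rtotal_order c x) as [Lc|[Lc|Lc]]; try contradiction.
  all: first [ solve [apply L1; [exists a | exists b]; split; auto]
             | solve [apply L2; [exists a | exists c]; split; auto]
             | solve [apply L3; [exists b | exists c]; split; auto]
             | solve [apply R1; [exists a | exists b]; split; auto]
             | solve [apply R2; [exists a | exists c]; split; auto]
             | solve [apply R3; [exists b | exists c]; split; auto] ].
Qed.

Definition W (t : R) : Prop := (-1 < t /\ t < 0) \/ (0 < t /\ t < 1).

Lemma lip_open (D : R -> Prop) (k : R -> R) : R_open D ->
  (forall t0, D t0 -> exists r, r > 0 /\ forall t, Rabs (t - t0) < r -> Rabs (k t - k t0) <= Rabs (t - t0)) ->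
  forall U, R_open U -> R_open (fun t => D t /\ U (k t)).
Proof.
  intros HD Hk U HU t0 [Dt0 Ut0].
  destruct (HD t0 Dt0) as [d1 [Hd1 B1]]. destruct (Hk t0 Dt0) as [r [Hr Br]].
  destruct (HU _ Ut0) as [e [He Be]].
  exists (Rmin d1 (Rmin r e)). split; [unfold Rmin; repeat destruct (Rle_dec _ _); lra|].
  intros t Ht.
  assert (Rabs (t - t0) < d1 /\ Rabs (t - t0) < r /\ Rabs (t - t0) < e) as [A [B C]]
    by (unfold Rmin in Ht; repeat destruct (Rle_dec _ _); repeat split; lra).
  split; auto. apply Be. specialize (Br t B). lra.
Qed.

Lemma sub_all (X : TopSpace) (A : X -> Prop) : (forall x, A x) -> homeomorphic (subspace X A) X.
Proof.
  intros HA. exists (fun y => proj1_sig y), (fun x => exist A x (HA x)). repeat split.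
  - intros [x Hx]. sig_eq. reflexivity.
  - intros V HV. exists V. split; auto. tauto.
  - intros V [U [HU EU]]. apply open_ext with U; auto. intros x. rewrite (EU (exist A x (HA x))). tauto.
Qed.

Lemma cardR_W x : homeomorphic (card R_top x) (subspace R_top W).
Proof.
  unfold card.
  destruct (mb_two None x None (Some (-1)) 0 (Some 1)) as [f [M _]]; simpl; try lra; auto.
  eapply homeo_trans.
  { apply (sub_ext R_top _ (fun y => True /\ (iv None (Some x) y \/ iv (Some x) None y))).
    intro y. unfold iv; simpl. split.
    - intros H. split; auto. destruct (Rtotal_order y x) as [A|[A|A]]; [left|contradiction|right]; tauto.
    - intros [_ [[_ A]|[A _]]]; lra. }
  eapply homeo_trans.
  { exact (mb_homeo (fun _ => True) _ _ f (open_two None x None) (open_two (Some (-1)) 0 (Some 1)) M (fun _ _ => iff_refl _)). }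
  apply sub_ext. intro y. unfold iv, W; simpl. tauto.
Qed.

Lemma no3_Z (Z : TopSpace) (v : Z) (x2 : R) : homeomorphic (card Z v) (card R_top x2) ->
  forall A B C : Z -> Prop, is_open Z A -> is_open Z B -> is_open Z C ->
  (forall y, y <> v -> A y \/ B y \/ C y) ->
  (forall y, A y -> B y -> False) -> (forall y, A y -> C y -> False) -> (forall y, B y -> C y -> False) ->
  (exists y, y <> v /\ A y) -> (exists y, y <> v /\ B y) -> (exists y, y <> v /\ C y) -> False.
Proof.
  intros [g [gi [G1 [G2 [G3 G4]]]]] A B C HA HB HC Cov D1 D2 D3 [a [Ha Aa]] [b [Hb Bb]] [c [Hc Cc]].
  assert (TR : forall P : Z -> Prop, is_open Z P -> exists O, R_open O /\
     forall t (H : t <> x2), P (proj1_sig (gi (exist _ t H))) <-> O t).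
  { intros P HP. destruct (open_to_sub _ _ _ gi P G4 HP) as [O [HO EO]].
    exists O. split; [exact HO|]. intros t H. apply (EO (exist _ t H)). }
  destruct (TR A HA) as [OA [HOA EA]]. destruct (TR B HB) as [OB [HOB EB]]. destruct (TR C HC) as [OC [HOC EC]].
  assert (Hne : R_open (fun t => t <> x2)).
  { apply (open_ext R_top (fun t => iv None (Some x2) t \/ iv (Some x2) None t)); [apply open_two|].
    intro t. unfold iv; simpl. split; [intros [[_ H]|[H _]]; lra|].
    intro H. destruct (Rtotal_order t x2) as [E|[E|E]]; [left|contradiction|right]; tauto. }
  apply (no3 x2 (fun t => t <> x2 /\ OA t) (fun t => t <> x2 /\ OB t) (fun t => t <> x2 /\ OC t)).
  - apply (open_inter R_top); auto.
  - apply (open_inter R_top); auto.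
  - apply (open_inter R_top); auto.
  - intros t H. set (y := proj1_sig (gi (exist _ t H))).
    assert (Hy : y <> v) by exact (proj2_sig (gi (exist _ t H))).
    destruct (Cov y Hy) as [K|[K|K]]; [left|right;left|right;right]; split; auto.
    + apply (proj1 (EA t H)); exact K.
    + apply (proj1 (EB t H)); exact K.
    + apply (proj1 (EC t H)); exact K.
  - intros t H [_ KA] [_ KB]. apply (D1 (proj1_sig (gi (exist _ t H)))); [apply (proj2 (EA t H))|apply (proj2 (EB t H))]; auto.
  - intros t H [_ KA] [_ KB]. apply (D2 (proj1_sig (gi (exist _ t H)))); [apply (proj2 (EA t H))|apply (proj2 (EC t H))]; auto.
  - intros t H [_ KA] [_ KB]. apply (D3 (proj1_sig (gi (exist _ t H)))); [apply (proj2 (EB t H))|apply (proj2 (EC t H))]; auto.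
  - set (p := g (exist _ a Ha)). exists (proj1_sig p). assert (Hp : proj1_sig p <> x2) by exact (proj2_sig p).
    split; auto. split; auto. apply (proj1 (EA _ Hp)).
    assert (E : forall pf, exist (fun x : R_top => x <> x2) (proj1_sig p) pf = p) by (intros; apply proj_inj; reflexivity).
    rewrite E.
    unfold p. rewrite G1. exact Aa.
  - set (p := g (exist _ b Hb)). exists (proj1_sig p). assert (Hp : proj1_sig p <> x2) by exact (proj2_sig p).
    split; auto. split; auto. apply (proj1 (EB _ Hp)).
    assert (E : forall pf, exist (fun x : R_top => x <> x2) (proj1_sig p) pf = p) by (intros; apply proj_inj; reflexivity).
    rewrite E.
    unfold p. rewrite G1. exact Bb.
  - set (p := g (exist _ c Hc)). exists (proj1_sig p). assert (Hp : proj1_sig p <> x2) by exact (proj2_sig p).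
    split; auto. split; auto. apply (proj1 (EC _ Hp)).
    assert (E : forall pf, exist (fun x : R_top => x <> x2) (proj1_sig p) pf = p) by (intros; apply proj_inj; reflexivity).
    rewrite E.
    unfold p. rewrite G1. exact Cc.
Qed.

Lemma R_open_ne x : R_open (fun t => t <> x).
Proof.
  apply (open_ext R_top (fun t => iv None (Some x) t \/ iv (Some x) None t)); [apply open_two|].
  intro t. unfold iv; simpl. split; [intros [[_ H]|[H _]]; lra|].
  intro H. destruct (Rtotal_order t x) as [E|[E|E]]; [left|contradiction|right]; tauto.
Qed.

Lemma R_open_W : R_open W.
Proof.
  apply (open_ext R_top (fun t => iv (Some (-1)) (Some 0) t \/ iv (Some 0) (Some 1) t)); [apply open_two|].
  intro t. unfold iv, W; simpl. tauto.
Qed.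

Lemma ball_open c e : R_open (fun t => Rabs (t - c) < e).
Proof.
  intros t Ht. exists (e - Rabs (t - c)). split; [lra|]. intros u Hu.
  pose proof (Rabs_triang (u - t) (t - c)). replace (u - t + (t - c)) with (u - c) in H by ring. lra.
Qed.

Lemma lin_open sg p q : (sg = 1 \/ sg = -1) -> R_open (fun t => p < sg * t < q).
Proof.
  intros Hs t [A B]. exists (Rmin (sg * t - p) (q - sg * t)). split.
  - unfold Rmin; destruct (Rle_dec _ _); lra.
  - intros u Hu. apply abs_lt_inv in Hu. unfold Rmin in Hu. destruct (Rle_dec _ _); destruct Hs; subst; split; lra.
Qed.

Lemma no_sign_change f e : cont_on (fun t => 0 < t < e) f -> (forall t, 0 < t < e -> f t <> 0) ->
  forall t1 t2, 0 < t1 < e -> 0 < t2 < e -> f t1 < 0 -> 0 < f t2 -> False.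
Proof.
  intros C NZ t1 t2 H1 H2 F1 F2.
  destruct (Rle_dec t1 t2) as [L|L].
  - destruct (ivt t1 t2 f 0 L) as [c [Hc E]].
    + eapply cont_on_sub; [exact C|]. intros x Hx. lra.
    + left. split; lra.
    + apply (NZ c); auto. lra.
  - destruct (ivt t2 t1 f 0) as [c [Hc E]]; [lra| | |].
    + eapply cont_on_sub; [exact C|]. intros x Hx. lra.
    + right. split; lra.
    + apply (NZ c); auto. lra.
Qed.

Theorem recon_R : reconstructible R_top.
Proof.
  intros Z HZ.
  destruct (deck2 _ _ HZ (0 : R_top)) as [z Hz].
  assert (HW : homeomorphic (card Z z) (subspace R_top W))
    by (eapply homeo_trans; [apply homeo_sym; exact Hz| apply cardR_W]).
  destruct HW as [h [hi [H1 [H2 [H3 H4]]]]].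
  pose (Hf := fun y : Z => (match excluded_middle_informative (y <> z) with
              | left H => proj1_sig (h (exist _ y H)) | right _ => 0 end : R)).
  pose (Hi := fun t : R => match excluded_middle_informative (W t) with
              | left H => proj1_sig (hi (exist _ t H)) | right _ => z end).
  assert (Hf_spec : forall y (H : y <> z), Hf y = proj1_sig (h (exist _ y H))).
  { intros y H. unfold Hf. destruct (excluded_middle_informative (y <> z)) as [H'|H']; [|contradiction].
    replace H' with H by apply proof_irrelevance. reflexivity. }
  assert (Hi_spec : forall t (H : W t), Hi t = proj1_sig (hi (exist _ t H))).
  { intros t H. unfold Hi. destruct (excluded_middle_informative (W t)) as [H'|H']; [|contradiction].
    replace H' with H by apply proof_irrelevance. reflexivity. }
  assert (HfW : forall y, y <> z -> W (Hf y)).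
  { intros y H. rewrite (Hf_spec y H). exact (proj2_sig (h (exist _ y H))). }
  assert (HiZ : forall t, W t -> Hi t <> z).
  { intros t H. rewrite (Hi_spec t H). exact (proj2_sig (hi (exist _ t H))). }
  assert (HiHf : forall y, y <> z -> Hi (Hf y) = y).
  { intros y H. rewrite (Hi_spec _ (HfW y H)).
    assert (E : exist W (Hf y) (HfW y H) = h (exist _ y H)) by (apply proj_inj; simpl; apply Hf_spec).
    rewrite E, H1. reflexivity. }
  assert (HfHi : forall t, W t -> Hf (Hi t) = t).
  { intros t H. rewrite (Hf_spec _ (HiZ t H)).
    assert (E : exist (fun y => y <> z) (Hi t) (HiZ t H) = hi (exist _ t H)) by (apply proj_inj; simpl; apply Hi_spec).
    rewrite E, H2. reflexivity. }
  assert (HfI : forall y1 y2, y1 <> z -> y2 <> z -> Hf y1 = Hf y2 -> y1 = y2).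
  { intros y1 y2 A B E. rewrite <- (HiHf y1 A), <- (HiHf y2 B), E. reflexivity. }
  assert (Wm : W (-1/2)) by (unfold W; lra). assert (Wp : W (1/2)) by (unfold W; lra).
  assert (Hac : Hi (-1/2) <> Hi (1/2)).
  { intro E. apply (f_equal Hf) in E. rewrite !HfHi in E; auto. lra. }
  assert (HC : forall t, hausdorff (card Z t)).
  { intro t. destruct (deck1 _ _ HZ t) as [x Hx].
    eapply hausdorff_homeo; [exact Hx|]. apply hausdorff_sub, R_hausdorff. }
  destruct (sep_Z Z z (Hi (-1/2)) (Hi (1/2)) (fun e => HiZ _ Wm (eq_sym e)) (fun e => HiZ _ Wp (eq_sym e)) Hac HC)
    as [T1Z HZH].
  set (w := Hi (-1/2)).
  assert (zw : z <> w) by (exact (fun e => HiZ _ Wm (eq_sym e))).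
  destruct (deck1 _ _ HZ w) as [x1 [g [gi [G1 [G2 [G3 G4]]]]]].
  pose (Gf := fun y : Z => (match excluded_middle_informative (y <> w) with
              | left H => proj1_sig (g (exist _ y H)) | right _ => x1 end : R)).
  pose (Gi := fun t : R => match excluded_middle_informative (t <> x1) with
              | left H => proj1_sig (gi (exist _ t H)) | right _ => w end).
  assert (Gf_spec : forall y (H : y <> w), Gf y = proj1_sig (g (exist _ y H))).
  { intros y H. unfold Gf. destruct (excluded_middle_informative (y <> w)) as [H'|H']; [|contradiction].
    replace H' with H by apply proof_irrelevance. reflexivity. }
  assert (Gi_spec : forall t (H : t <> x1), Gi t = proj1_sig (gi (exist _ t H))).
  { intros t H. unfold Gi. destruct (excluded_middle_informative _) as [H'|H']; [|contradiction].
    replace H' with H by apply proof_irrelevance. reflexivity. }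
  assert (GfX : forall y, y <> w -> Gf y <> x1).
  { intros y H. rewrite (Gf_spec y H). exact (proj2_sig (g (exist _ y H))). }
  assert (GiW : forall t, t <> x1 -> Gi t <> w).
  { intros t H. rewrite (Gi_spec t H). exact (proj2_sig (gi (exist _ t H))). }
  assert (GiGf : forall y, y <> w -> Gi (Gf y) = y).
  { intros y H. rewrite (Gi_spec _ (GfX y H)).
    assert (E : exist (fun t => t <> x1) (Gf y) (GfX y H) = g (exist _ y H)) by (apply proj_inj; simpl; apply Gf_spec).
    rewrite E, G1. reflexivity. }
  assert (GfGi : forall t, t <> x1 -> Gf (Gi t) = t).
  { intros t H. rewrite (Gf_spec _ (GiW t H)).
    assert (E : exist (fun y => y <> w) (Gi t) (GiW t H) = gi (exist _ t H)) by (apply proj_inj; simpl; apply Gi_spec).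
    rewrite E, G2. reflexivity. }
  assert (C1 : forall O, R_open O -> is_open Z (fun y => y <> z /\ O (Hf y))).
  { intros O HO.
    pose proof (open_from_sub Z (subspace R_top W) _ h (fun t => O (proj1_sig t)) (T1Z z) H3) as K.
    eapply open_ext; [apply K|].
    - exists O. split; auto. tauto.
    - intro y. split.
      + intros [H E]. split; auto. rewrite (Hf_spec y H). exact E.
      + intros [H E]. exists H. rewrite <- (Hf_spec y H). exact E. }
  assert (C4 : forall O, R_open O -> is_open Z (fun y => y <> w /\ O (Gf y))).
  { intros O HO.
    pose proof (open_from_sub Z (card R_top x1) _ g (fun t => O (proj1_sig t)) (T1Z w) G3) as K.
    eapply open_ext; [apply K|].
    - exists O. split; auto. tauto.
    - intro y. split.
      + intros [H E]. split; auto. rewrite (Gf_spec y H). exact E.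
      + intros [H E]. exists H. rewrite <- (Gf_spec y H). exact E. }
  assert (C2 : forall U, is_open Z U -> R_open (fun t => t <> x1 /\ U (Gi t))).
  { intros U HU. destruct (open_to_sub Z _ _ gi U G4 HU) as [O [HO EO]].
    apply (open_ext R_top (fun t => t <> x1 /\ O t)).
    - apply (open_inter R_top); auto. apply R_open_ne.
    - intro t. split; intros [H E]; split; auto.
      + rewrite (Gi_spec t H). apply (EO (exist _ t H)). exact E.
      + apply (EO (exist _ t H)). rewrite <- (Gi_spec t H). exact E. }
  assert (C3 : forall U, is_open Z U -> R_open (fun t => W t /\ U (Hi t))).
  { intros U HU. destruct (open_to_sub Z _ _ hi U H4 HU) as [O [HO EO]].
    apply (open_ext R_top (fun t => W t /\ O t)).
    - apply (open_inter R_top); auto. apply R_open_W.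
    - intro t. split; intros [H E]; split; auto.
      + rewrite (Hi_spec t H). apply (EO (exist _ t H)). exact E.
      + rewrite (Hi_spec t H) in E. apply (EO (exist _ t H)). exact E. }
  set (s := Gf z).
  assert (sx : s <> x1) by (apply GfX; auto).
  assert (Gis : Gi s = z) by (apply GiGf; auto).
  set (eps := Rabs (s - x1)).
  assert (Heps : eps > 0) by (apply Rabs_pos_lt; intro; apply sx; lra).
  pose (phi := fun t => Hf (Gi t)).
  assert (GiZ : forall t, t <> x1 -> t <> s -> Gi t <> z).
  { intros t A B E. apply B. rewrite <- (GfGi t A), E. reflexivity. }
  assert (phiW : forall t, t <> x1 -> t <> s -> W (phi t)).
  { intros t A B. apply HfW, GiZ; auto. }
  assert (phiI : forall t1 t2, t1 <> x1 -> t1 <> s -> t2 <> x1 -> t2 <> s -> phi t1 = phi t2 -> t1 = t2).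
  { intros t1 t2 A B C D E. apply HfI in E; try apply GiZ; auto.
    rewrite <- (GfGi t1 A), <- (GfGi t2 C), E. reflexivity. }
  assert (phiC : cont_on (fun t => t <> x1 /\ t <> s) phi).
  { intros t0 [A0 B0] e He.
    pose proof (C2 _ (C1 _ (ball_open (phi t0) e))) as K.
    destruct (K t0) as [d [Hd Bd]].
    { split; auto. split; [apply GiZ; auto|]. unfold phi. rewrite Rminus_diag, Rabs_R0. lra. }
    exists d. split; auto. intros t [A B] Ht. destruct (Bd t Ht) as [_ [_ E]]. exact E. }
  assert (abs_sg : forall sg, (sg = 1 \/ sg = -1) -> Rabs sg = 1).
  { intros sg [->| ->]; unfold Rabs; destruct (Rcase_abs _); lra. }
  pose (psi := fun sg tau => phi (s + tau * sg)).
  assert (dom : forall sg tau, (sg = 1 \/ sg = -1) -> 0 < tau < eps -> s + tau * sg <> x1 /\ s + tau * sg <> s).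
  { intros sg tau Hs Ht. split.
    - intro E. assert (Rabs (s + tau * sg - s) = tau) by (destruct Hs as [->| ->]; [replace (s + tau * 1 - s) with tau by ring | replace (s + tau * -1 - s) with (- tau) by ring; rewrite Rabs_Ropp]; apply Rabs_right; lra).
      rewrite E in H. unfold eps in Ht. rewrite <- Rabs_Ropp in Ht. replace (- (s - x1)) with (x1 - s) in Ht by ring. lra.
    - destruct Hs as [->| ->]; lra. }
  assert (psiC : forall sg, (sg = 1 \/ sg = -1) -> cont_on (fun tau => 0 < tau < eps) (psi sg)).
  { intros sg Hs. apply (cont_affine (fun t => t <> x1 /\ t <> s)); [exact phiC|]. intros tau Ht. apply dom; auto. }
  assert (psiW : forall sg tau, (sg = 1 \/ sg = -1) -> 0 < tau < eps -> W (psi sg tau)).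
  { intros sg tau Hs Ht. destruct (dom sg tau Hs Ht). apply phiW; auto. }
  assert (psiI : forall sg t1 t2, (sg = 1 \/ sg = -1) -> 0 < t1 < eps -> 0 < t2 < eps -> psi sg t1 = psi sg t2 -> t1 = t2).
  { intros sg t1 t2 Hs A B E. destruct (dom sg t1 Hs A). destruct (dom sg t2 Hs B).
    apply phiI in E; auto. destruct Hs as [->| ->]; lra. }
  assert (psiGi : forall sg tau, (sg = 1 \/ sg = -1) -> 0 < tau < eps -> Hi (psi sg tau) = Gi (s + tau * sg)).
  { intros sg tau Hs Ht. destruct (dom sg tau Hs Ht). unfold psi, phi. apply HiHf. apply GiZ; auto. }
  assert (SIDE : forall sg, (sg = 1 \/ sg = -1) -> exists L, ~ W L /\
     (forall eta, eta > 0 -> exists d, d > 0 /\ d <= eps /\ forall tau, 0 < tau < d -> Rabs (psi sg tau - L) < eta) /\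
     ((forall tau, 0 < tau < eps -> 0 < psi sg tau) \/ (forall tau, 0 < tau < eps -> psi sg tau < 0))).
  { intros sg Hs.
    assert (Mono := inj_mono 0 eps (psi sg) (psiC sg Hs) (fun x y A B => psiI sg x y Hs A B)).
    destruct (mono_lim (psi sg) eps 1 Heps Mono) as [L HL].
    { intros t Ht. destruct (psiW sg t Hs Ht) as [[A B]|[A B]]; unfold Rabs; destruct (Rcase_abs _); lra. }
    exists L. split; [|split; auto].
    - intro WL. set (y := Hi L).
      destruct (HZH y z (HiZ L WL)) as [Uy [Uz [HUy [HUz [Uyy [Uzz D]]]]]].
      destruct (C3 Uy HUy L) as [eta [Heta Beta]]; [split; auto|].
      destruct (C2 Uz HUz s) as [del [Hdel Bdel]]; [split; auto; rewrite Gis; auto|].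
      destruct (HL eta Heta) as [d [Hd [Hde Bd]]].
      set (tau := Rmin d del / 2).
      assert (Ht : 0 < tau < d /\ tau < del).
      { unfold tau, Rmin. destruct (Rle_dec d del); repeat split; lra. }
      destruct Ht as [[T1 T2] T3].
      assert (Te : 0 < tau < eps) by lra.
      destruct (Bdel (s + tau * sg)) as [_ Uz'].
      { replace (s + tau * sg - s) with (tau * sg) by ring. rewrite Rabs_mult.
        rewrite (abs_sg sg Hs), Rmult_1_r, Rabs_right; lra. }
      destruct (Beta (psi sg tau)) as [_ Uy']; [apply Bd; lra|].
      rewrite psiGi in Uy'; auto. apply (D _ Uy' Uz').
    - destruct (classic (exists tau, 0 < tau < eps /\ psi sg tau < 0)) as [[t1 [T1 F1]]|N].
      + right. intros tau Ht. destruct (psiW sg tau Hs Ht) as [[A B]|[A B]]; auto.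
        exfalso. apply (no_sign_change (psi sg) eps (psiC sg Hs)) with t1 tau; auto.
        intros t Tt. destruct (psiW sg t Hs Tt); lra.
      + left. intros tau Ht. destruct (psiW sg tau Hs Ht) as [[A B]|[A B]]; auto.
        exfalso. apply N. exists tau. auto. }
  assert (REP : forall y, y <> z -> y <> w -> Rabs (Gf y - s) < eps ->
     exists sg tau, (sg = 1 \/ sg = -1) /\ 0 < tau < eps /\ Hf y = psi sg tau /\ Rabs (Gf y - s) = tau).
  { intros y Hyz Hyw Hd.
    assert (Ne : Gf y <> s). { intro E. apply Hyz. rewrite <- (GiGf y Hyw), E. exact Gis. }
    destruct (Rlt_le_dec s (Gf y)) as [L|L].
    - exists 1, (Gf y - s). split; [left; auto|]. split; [split; [lra| rewrite Rabs_right in Hd; lra]|].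
      split; [|rewrite Rabs_right; lra].
      unfold psi, phi. replace (s + (Gf y - s) * 1) with (Gf y) by ring. rewrite GiGf; auto.
    - exists (-1), (s - Gf y). split; [right; auto|].
      assert (Gf y < s) by (destruct L; auto; contradiction).
      rewrite Rabs_left in Hd by lra.
      split; [split; lra|].
      split; [|rewrite Rabs_left; lra].
      unfold psi, phi. replace (s + (s - Gf y) * -1) with (Gf y) by ring. rewrite GiGf; auto. }
  assert (NOTSAME : forall sgc, (sgc = 1 \/ sgc = -1) ->
     ~ (forall sg, (sg = 1 \/ sg = -1) -> forall tau, 0 < tau < eps -> 0 < sgc * psi sg tau)).
  { intros sgc Hsgc ALL.
    assert (Wv : W (- sgc / 2)) by (unfold W; destruct Hsgc as [->| ->]; lra).
    set (v := Hi (- sgc / 2)).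
    destruct (deck1 _ _ HZ v) as [x2 Hx2].
    assert (HiI : forall t1 t2, W t1 -> W t2 -> Hi t1 = Hi t2 -> t1 = t2).
    { intros t1 t2 A B E. rewrite <- (HfHi t1 A), <- (HfHi t2 B), E. reflexivity. }
    assert (HfB : forall y, y <> z -> -1 < sgc * Hf y < 1 /\ sgc * Hf y <> 0).
    { intros y Hy. destruct (HfW y Hy) as [[A B]|[A B]]; destruct Hsgc as [->| ->]; split; try split; lra. }
    apply (no3_Z Z v x2 Hx2
      (fun y => y <> z /\ -2 < sgc * Hf y < -1/2)
      (fun y => y <> z /\ -1/2 < sgc * Hf y < 0)
      (fun y => y = z \/ (y <> z /\ 0 < sgc * Hf y < 2))).
    - apply (C1 (fun t => -2 < sgc * t < -1/2)). apply lin_open; auto.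
    - apply (C1 (fun t => -1/2 < sgc * t < 0)). apply lin_open; auto.
    - apply open_local. intros y0 Hy0. destruct (classic (y0 = z)) as [->|Hne].
      + exists (fun y => y <> w /\ Rabs (Gf y - s) < eps). split; [apply (C4 (fun t => Rabs (t - s) < eps)), ball_open|]. split.
        * split; auto. unfold s. rewrite Rminus_diag, Rabs_R0. lra.
        * intros y [Hyw Hd]. destruct (classic (y = z)) as [->|Hyz]; [left; auto|right].
          split; auto. destruct (REP y Hyz Hyw Hd) as [sg [tau [Hs [Ht [E _]]]]].
          rewrite E. split; [apply ALL; auto|]. rewrite <- E. destruct (HfB y Hyz). lra.
      + exists (fun y => y <> z /\ 0 < sgc * Hf y < 2). split; [apply (C1 (fun t => 0 < sgc * t < 2)), lin_open; auto|].
        split.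
        * destruct Hy0 as [E|E]; [contradiction|exact E].
        * intros y Hy. right. exact Hy.
    - intros y Hyv. destruct (classic (y = z)) as [->|Hyz]; [right; right; left; auto|].
      destruct (HfB y Hyz) as [[A B] C].
      destruct (Rtotal_order (sgc * Hf y) (-1/2)) as [K|[K|K]].
      + left. split; auto; lra.
      + exfalso. apply Hyv. unfold v. rewrite <- (HiHf y Hyz). f_equal.
        destruct Hsgc as [->| ->]; lra.
      + destruct (Rlt_le_dec (sgc * Hf y) 0) as [K'|K'].
        * right; left. split; auto; lra.
        * right; right; right. split; auto. split; [destruct K'; [lra| exfalso; apply C; auto]|lra].
    - intros y [_ A] [_ B]. lra.
    - intros y [Hyz A] [E|[_ B]]; [contradiction|lra].
    - intros y [Hyz A] [E|[_ B]]; [contradiction|lra].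
    - assert (Wa : W (- 3 * sgc / 4)) by (unfold W; destruct Hsgc as [->| ->]; lra).
      exists (Hi (- 3 * sgc / 4)). split.
      + intro E. apply HiI in E; auto. destruct Hsgc as [->| ->]; lra.
      + split; [apply HiZ; auto|]. rewrite HfHi; auto. destruct Hsgc as [->| ->]; lra.
    - assert (Wa : W (- sgc / 4)) by (unfold W; destruct Hsgc as [->| ->]; lra).
      exists (Hi (- sgc / 4)). split.
      + intro E. apply HiI in E; auto. destruct Hsgc as [->| ->]; lra.
      + split; [apply HiZ; auto|]. rewrite HfHi; auto. destruct Hsgc as [->| ->]; lra.
    - exists z. split; [|left; auto]. intro E. apply (HiZ _ Wv). symmetry. exact E. }
  assert (FIN : forall sp sn Lp Ln, ((sp = 1 /\ sn = -1) \/ (sp = -1 /\ sn = 1)) -> ~ W Lp -> ~ W Ln ->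
     (forall eta, eta > 0 -> exists d, d > 0 /\ d <= eps /\ forall tau, 0 < tau < d -> Rabs (psi sp tau - Lp) < eta) ->
     (forall eta, eta > 0 -> exists d, d > 0 /\ d <= eps /\ forall tau, 0 < tau < d -> Rabs (psi sn tau - Ln) < eta) ->
     (forall tau, 0 < tau < eps -> 0 < psi sp tau) ->
     (forall tau, 0 < tau < eps -> psi sn tau < 0) ->
     homeomorphic Z R_top).
  { intros sp sn Lp Ln Hspn NWp NWn LimP LimN PosP NegN.
    assert (Hsp : sp = 1 \/ sp = -1) by (destruct Hspn as [[-> ->]|[-> ->]]; auto).
    assert (Hsn : sn = 1 \/ sn = -1) by (destruct Hspn as [[-> ->]|[-> ->]]; auto).
    assert (Lp01 : Lp = 0 \/ Lp = 1).
    { assert (0 <= Lp <= 1) as [Q1 Q2].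
      { split; apply Rnot_lt_le; intro K.
        - destruct (LimP (- Lp)) as [d [Hd [Hde B]]]; [lra|].
          specialize (B (d/2) ltac:(lra)). specialize (PosP (d/2) ltac:(lra)).
          apply abs_lt_inv in B. lra.
        - destruct (LimP (Lp - 1)) as [d [Hd [Hde B]]]; [lra|].
          specialize (B (d/2) ltac:(lra)).
          destruct (psiW sp (d/2) Hsp ltac:(lra)) as [[A1 A2]|[A1 A2]]; apply abs_lt_inv in B; lra. }
      destruct (Req_dec Lp 0); auto. destruct (Req_dec Lp 1); auto. exfalso. apply NWp. unfold W. right. split; lra. }
    assert (Ln01 : Ln = 0 \/ Ln = -1).
    { assert (-1 <= Ln <= 0) as [Q1 Q2].
      { split; apply Rnot_lt_le; intro K.
        - destruct (LimN (-1 - Ln)) as [d [Hd [Hde B]]]; [lra|].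
          specialize (B (d/2) ltac:(lra)).
          destruct (psiW sn (d/2) Hsn ltac:(lra)) as [[A1 A2]|[A1 A2]]; apply abs_lt_inv in B; lra.
        - destruct (LimN Ln) as [d [Hd [Hde B]]]; [lra|].
          specialize (B (d/2) ltac:(lra)). specialize (NegN (d/2) ltac:(lra)).
          apply abs_lt_inv in B. lra. }
      destruct (Req_dec Ln 0); auto. destruct (Req_dec Ln (-1)); auto. exfalso. apply NWn. unfold W. left. split; lra. }
    pose (kap := fun t => if Rlt_dec 0 t then Rabs (t - Lp) else - Rabs (t - Ln)).
    assert (kap_pos : forall t, 0 < t -> kap t = Rabs (t - Lp)).
    { intros t H. unfold kap. destruct (Rlt_dec 0 t); [reflexivity|contradiction]. }
    assert (kap_neg : forall t, t <= 0 -> kap t = - Rabs (t - Ln)).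
    { intros t H. unfold kap. destruct (Rlt_dec 0 t); [lra|reflexivity]. }
    assert (K1p : forall t, 0 < t < 1 -> 0 < kap t < 1).
    { intros t [A B]. rewrite kap_pos by lra. destruct Lp01 as [-> | ->]; unfold Rabs; destruct (Rcase_abs _); split; lra. }
    assert (K1n : forall t, -1 < t < 0 -> -1 < kap t < 0).
    { intros t [A B]. rewrite kap_neg by lra. destruct Ln01 as [-> | ->]; unfold Rabs; destruct (Rcase_abs _); split; lra. }
    assert (K1 : forall t, W t -> W (kap t)).
    { intros t [H|H]; [left; apply K1n | right; apply K1p]; auto. }
    assert (K2 : forall t, W t -> kap (kap t) = t).
    { intros t [H|H].
      - pose proof (K1n t H) as K. rewrite (kap_neg (kap t)) by lra. rewrite (kap_neg t) in * by lra.
        destruct H. destruct Ln01 as [-> | ->]; unfold Rabs in *; repeat destruct (Rcase_abs _); lra.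
      - pose proof (K1p t H) as K. rewrite (kap_pos (kap t)) by lra. rewrite (kap_pos t) in * by lra.
        destruct H. destruct Lp01 as [-> | ->]; unfold Rabs in *; repeat destruct (Rcase_abs _); lra. }
    assert (K3 : forall U, R_open U -> R_open (fun t => W t /\ U (kap t))).
    { apply lip_open; [apply R_open_W|]. intros t0 W0. exists (Rabs t0). split.
      - apply Rabs_pos_lt. intro E. rewrite E in W0. destruct W0 as [[A B]|[A B]]; lra.
      - intros t Ht. destruct W0 as [[A B]|[A B]].
        + rewrite (Rabs_left t0) in Ht by lra. apply abs_lt_inv in Ht.
          rewrite (kap_neg t), (kap_neg t0) by lra.
          replace (- Rabs (t - Ln) - - Rabs (t0 - Ln)) with (- (Rabs (t - Ln) - Rabs (t0 - Ln))) by ring.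
          rewrite Rabs_Ropp. pose proof (Rabs_triang_inv2 (t - Ln) (t0 - Ln)).
          replace (t - Ln - (t0 - Ln)) with (t - t0) in H by ring. exact H.
        + rewrite (Rabs_right t0) in Ht by lra. apply abs_lt_inv in Ht.
          rewrite (kap_pos t), (kap_pos t0) by lra.
          pose proof (Rabs_triang_inv2 (t - Lp) (t0 - Lp)).
          replace (t - Lp - (t0 - Lp)) with (t - t0) in H by ring. exact H. }
    assert (F1 : forall eta, eta > 0 -> exists d, d > 0 /\ forall y, y <> z -> y <> w -> Rabs (Gf y - s) < d -> Rabs (kap (Hf y)) < eta).
    { intros eta Heta. destruct (LimP eta Heta) as [d1 [Hd1 [Hd1e B1]]]. destruct (LimN eta Heta) as [d2 [Hd2 [Hd2e B2]]].
      exists (Rmin d1 d2). split; [unfold Rmin; destruct (Rle_dec _ _); lra|].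
      intros y Hyz Hyw Hd.
      assert (Hd' : Rabs (Gf y - s) < d1 /\ Rabs (Gf y - s) < d2) by (unfold Rmin in Hd; destruct (Rle_dec _ _); split; lra).
      destruct Hd' as [Ha Hb].
      destruct (REP y Hyz Hyw ltac:(lra)) as [sg [tau [Hs [Ht [E Et]]]]].
      rewrite E.
      assert (sg = sp \/ sg = sn) as [-> | ->]
        by (destruct Hs as [->| ->]; destruct Hspn as [[-> ->]|[-> ->]]; [left|right|right|left]; lra).
      - rewrite kap_pos by (apply PosP; auto). rewrite Rabs_Rabsolu. apply B1. lra.
      - rewrite kap_neg by (left; apply NegN; auto). rewrite Rabs_Ropp, Rabs_Rabsolu. apply B2. lra. }
    assert (F2 : forall U, is_open Z U -> U z -> exists eta, eta > 0 /\ forall t, W t -> Rabs t < eta -> U (Hi (kap t))).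
    { intros U HU Uz.
      destruct (C2 U HU s) as [del [Hdel Bdel]]; [split; auto; rewrite Gis; auto|].
      set (t0 := Rmin del eps / 2).
      assert (T0 : 0 < t0 < eps /\ t0 < del) by (unfold t0, Rmin; destruct (Rle_dec _ _); repeat split; lra).
      destruct T0 as [T0 T0'].
      assert (SideU : forall sg L, (sg = 1 \/ sg = -1) ->
          (forall eta, eta > 0 -> exists d, d > 0 /\ d <= eps /\ forall tau, 0 < tau < d -> Rabs (psi sg tau - L) < eta) ->
          forall r, 0 < r < Rabs (psi sg t0 - L) -> exists tau, 0 < tau <= t0 /\ Rabs (psi sg tau - L) = r).
      { intros sg L Hs Lim r [R1 R2].
        destruct (Lim r R1) as [d [Hd [Hde B]]].
        set (t1 := Rmin d t0 / 2).
        assert (T1 : 0 < t1 < d /\ t1 < t0) by (unfold t1, Rmin; destruct (Rle_dec _ _); repeat split; lra).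
        destruct T1 as [T1 T1'].
        destruct (ivt t1 t0 (fun tau => Rabs (psi sg tau - L)) r) as [tau [Htau E]].
        - lra.
        - intros x Hx e He. destruct (psiC sg Hs x ltac:(lra) e He) as [dd [Hdd Bdd]].
          exists dd. split; auto. intros y Hy Hyx.
          pose proof (Rabs_triang_inv2 (psi sg y - L) (psi sg x - L)).
          replace (psi sg y - L - (psi sg x - L)) with (psi sg y - psi sg x) in H by ring.
          specialize (Bdd y ltac:(lra) Hyx). lra.
        - left. split; [specialize (B t1 ltac:(lra)); lra| lra].
        - exists tau. split; [lra| exact E]. }
      set (ap := Rabs (psi sp t0 - Lp)). set (an := Rabs (psi sn t0 - Ln)).
      assert (Hap : ap > 0).
      { apply Rabs_pos_lt. intro E. apply NWp. replace Lp with (psi sp t0) by lra. apply psiW; auto. }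
      assert (Han : an > 0).
      { apply Rabs_pos_lt. intro E. apply NWn. replace Ln with (psi sn t0) by lra. apply psiW; auto. }
      exists (Rmin ap an). split; [unfold Rmin; destruct (Rle_dec _ _); lra|].
      intros t Wt Ht.
      assert (Hta : Rabs t < ap /\ Rabs t < an) by (unfold Rmin in Ht; destruct (Rle_dec _ _); split; lra).
      destruct Hta as [Hta Htn].
      assert (Fin : forall sg tau, (sg = 1 \/ sg = -1) -> 0 < tau <= t0 -> kap (psi sg tau) = t -> U (Hi (kap t))).
      { intros sg tau Hs Htau Ktau.
        assert (Wp' : W (psi sg tau)) by (apply psiW; auto; lra).
        rewrite <- Ktau, K2 by auto.
        rewrite psiGi by (auto; lra).
        destruct (Bdel (s + tau * sg)) as [_ UU]; [|exact UU].
        replace (s + tau * sg - s) with (tau * sg) by ring. rewrite Rabs_mult, (abs_sg _ Hs), Rmult_1_r, Rabs_right; lra. }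
      destruct Wt as [[A B]|[A B]].
      - destruct (SideU sn Ln Hsn LimN (- t)) as [tau [Htau E]].
        { split; [lra|]. rewrite Rabs_left in Htn by lra. fold an. lra. }
        apply (Fin sn tau Hsn Htau).
        rewrite kap_neg by (left; apply NegN; lra). rewrite E. ring.
      - destruct (SideU sp Lp Hsp LimP t) as [tau [Htau E]].
        { split; [lra|]. rewrite Rabs_right in Hta by lra. fold ap. lra. }
        apply (Fin sp tau Hsp Htau).
        rewrite kap_pos by (apply PosP; lra). rewrite E. reflexivity. }
    pose (f := fun y : Z => if excluded_middle_informative (y = z) then 0 else kap (Hf y)).
    pose (F := fun t : R => if excluded_middle_informative (t = 0) then z else Hi (kap t)).
    assert (fz : f z = 0).
    { unfold f. destruct (excluded_middle_informative (z = z)); [reflexivity|contradiction]. }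
    assert (fnz : forall y, y <> z -> f y = kap (Hf y)).
    { intros y H. unfold f. destruct (excluded_middle_informative (y = z)); [contradiction|reflexivity]. }
    assert (F0 : F 0 = z).
    { unfold F. destruct (excluded_middle_informative (0 = 0)); [reflexivity|contradiction]. }
    assert (Fnz : forall t, t <> 0 -> F t = Hi (kap t)).
    { intros t H. unfold F. destruct (excluded_middle_informative (t = 0)); [contradiction|reflexivity]. }
    assert (WB : forall t, W t -> -1 < t < 1) by (intros t [[A B]|[A B]]; split; lra).
    assert (WI : forall t, -1 < t < 1 -> t <> 0 -> W t).
    { intros t [A B] H. destruct (Rtotal_order t 0) as [K|[K|K]]; [left|contradiction|right]; split; lra. }
    assert (W0 : ~ W 0) by (intros [[A B]|[A B]]; lra).
    assert (fr : forall y, -1 < f y < 1).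
    { intro y. destruct (classic (y = z)) as [->|H]; [rewrite fz; split; lra|].
      rewrite fnz by auto. apply WB, K1, HfW; auto. }
    assert (FfE : forall y, F (f y) = y).
    { intro y. destruct (classic (y = z)) as [->|H]; [rewrite fz; apply F0|].
      rewrite fnz by auto. assert (Wk : W (kap (Hf y))) by (apply K1, HfW; auto).
      rewrite Fnz by (intro E; rewrite E in Wk; contradiction).
      rewrite K2 by (apply HfW; auto). apply HiHf; auto. }
    assert (fFE : forall t, -1 < t < 1 -> f (F t) = t).
    { intros t Ht. destruct (Req_dec t 0) as [->|H]; [rewrite F0; apply fz|].
      assert (Wt : W t) by (apply WI; auto).
      rewrite Fnz by auto. rewrite fnz by (apply HiZ, K1; auto).
      rewrite HfHi by (apply K1; auto). apply K2; auto. }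
    assert (HZI : homeomorphic Z (subspace R_top (fun t => -1 < t < 1))).
    { exists (fun y => exist (fun t => -1 < t < 1) (f y) (fr y)), (fun t => F (proj1_sig t)).
      split; [|split; [|split]].
      - intro y. simpl. apply FfE.
      - intros [t Ht]. apply proj_inj. simpl. apply fFE; auto.
      - intros V [U [HU EU]].
        apply open_ext with (fun y => U (f y)); [| intro y; rewrite (EU (exist _ (f y) (fr y))); simpl; tauto].
        apply open_local. intros y0 Uy0. destruct (classic (y0 = z)) as [->|Hne].
        + rewrite fz in Uy0. destruct (HU 0 Uy0) as [eta [Heta Beta]].
          destruct (F1 eta Heta) as [d [Hd Bd]].
          exists (fun y => y <> w /\ Rabs (Gf y - s) < d). split; [apply (C4 (fun t => Rabs (t - s) < d)), ball_open|]. split.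
          * split; auto. unfold s. rewrite Rminus_diag, Rabs_R0. lra.
          * intros y [Hyw Hyd]. destruct (classic (y = z)) as [->|Hyz]; [rewrite fz; auto|].
            rewrite fnz by auto. apply Beta. rewrite Rminus_0_r. apply Bd; auto.
        + exists (fun y => y <> z /\ (fun t => W t /\ U (kap t)) (Hf y)). split; [apply (C1 (fun t => W t /\ U (kap t))), K3; auto|]. split.
          * split; auto. split; [apply HfW; auto|]. rewrite fnz in Uy0 by auto. exact Uy0.
          * intros y [Hyz [_ Uk]]. rewrite fnz by auto. exact Uk.
      - intros U HU.
        destruct (classic (U z)) as [Uz|NUz].
        + destruct (F2 U HU Uz) as [eta [Heta Beta]].
          exists (fun t => (W t /\ (fun u => W u /\ U (Hi u)) (kap t)) \/ Rabs (t - 0) < eta). split.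
          * apply (open_or R_top); [apply (K3 (fun u => W u /\ U (Hi u))), C3; auto| apply ball_open].
          * intros [t Ht]. simpl. rewrite Rminus_0_r. destruct (Req_dec t 0) as [->|H].
            -- rewrite F0. split; [intros _; right; rewrite Rabs_R0; lra| intros _; exact Uz].
            -- assert (Wt : W t) by (apply WI; auto). rewrite Fnz by auto. split.
               ++ intros Uk. left. split; [exact Wt| split; [apply K1; auto| exact Uk]].
               ++ intros [[_ [_ Uk]]|Hs]; [exact Uk| apply Beta; auto].
        + exists (fun t => W t /\ (fun u => W u /\ U (Hi u)) (kap t)). split; [apply (K3 (fun u => W u /\ U (Hi u))), C3; auto|].
          intros [t Ht]. simpl. destruct (Req_dec t 0) as [->|H].
          -- rewrite F0. split; [intro; contradiction| intros [A _]; contradiction].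
          -- assert (Wt : W t) by (apply WI; auto). rewrite Fnz by auto. split.
             ++ intros Uk. split; [exact Wt| split; [apply K1; auto| exact Uk]].
             ++ intros [_ [_ Uk]]. exact Uk. }
    eapply homeo_trans; [exact HZI|].
    destruct (mb_interval (Some (-1)) (Some 1) None None) as [f' [M _]]; simpl; try lra; auto.
    eapply homeo_trans.
    { apply (sub_ext R_top _ (fun t => True /\ iv (Some (-1)) (Some 1) t)). intro t. unfold iv; simpl. tauto. }
    eapply homeo_trans.
    { exact (mb_homeo (fun _ => True) _ _ f' (iv_open _ _) (iv_open None None) M (fun _ _ => iff_refl _)). }
    apply sub_all. intro t. unfold iv; simpl. tauto. }
  destruct (SIDE 1 (or_introl eq_refl)) as [L1 [NW1 [Lim1 S1]]].
  destruct (SIDE (-1) (or_intror eq_refl)) as [L2 [NW2 [Lim2 S2]]].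
  destruct S1 as [P1|N1]; destruct S2 as [P2|N2].
  - exfalso. apply (NOTSAME 1 (or_introl eq_refl)). intros sg [-> | ->] tau Ht; rewrite Rmult_1_l; auto.
  - apply (FIN 1 (-1) L1 L2); auto.
  - apply (FIN (-1) 1 L2 L1); auto.
  - exfalso. apply (NOTSAME (-1) (or_intror eq_refl)). intros sg [-> | ->] tau Ht.
    + specialize (N1 tau Ht). lra.
    + specialize (N2 tau Ht). lra.
Qed.

Theorem theorem2p2 :
  reconstructible R_top /\ reconstructible Q_top /\ reconstructible P_top.
Proof.
  split; [exact recon_R|]. split.
  - exact (recon_S true).
  - exact (recon_S false).
Qed.
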